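(* Let $\alpha_1,\alpha_2>0$ satisfy $\alpha_1-\alpha_2\ge \sqrt{2}\,e$. Let $p$ be analytic in $\mathbb{D}$ with $p(0)=1$. If $$1+\alpha_1 zp'(z)+\alpha_2 z^2p''(z)\prec z+\sqrt{1+z^2},$$ then $p(z)\prec e^z$.
   Context: $\mathbb{D}$ is the open unit disk. For $g,h$ analytic in $\mathbb{D}$, $g\prec h$ means there is an analytic $w:\mathbb{D}\to\mathbb{D}$ with $w(0)=0$ and $g=h\circ w$. $\sqrt{1+z^2}$ is the branch analytic in $\mathbb{D}$ with value $1$ at $0$. *)

(* Defs.v *)
From Stdlib Require Import Reals.
From Coquelicot Require Import Coquelicot.
Open Scope C_scope.

Definition in_disk (z : C) : Prop := (Cmod z < 1)%R.

Definition cderiv (f : C -> C) (z : C) (l : C) : Prop :=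
  @is_derive C_AbsRing C_NormedModule f z l.

Definition analytic_on_disk (f : C -> C) : Prop :=
  forall z, in_disk z -> @ex_derive C_AbsRing C_NormedModule f z.

Definition subord (g h : C -> C) : Prop :=
  exists w : C -> C,
    analytic_on_disk w /\ w 0 = 0 /\
    (forall z, in_disk z -> in_disk (w z)) /\
    (forall z, in_disk z -> g z = h (w z)).

Definition Cexp (z : C) : C :=
  RtoC (exp (Re z)) * (cos (Im z), sin (Im z)).

(* principal square root: for Re w > 0 (in particular w = 1 + z^2 with |z| < 1)
   this is the analytic branch taking value 1 at w = 1 *)
Definition Csqrt (w : C) : C :=
  (sqrt ((Cmod w + Re w) / 2),
   (if Rle_dec 0 (Im w) then 1 else -1) * sqrt ((Cmod w - Re w) / 2))%R.

(* Main.v *)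
Require Import Defs.
From Stdlib Require Import Reals Lra Psatz ClassicalEpsilon Classical_Prop.
From Coquelicot Require Import Coquelicot.
Open Scope C_scope.

Lemma cd_iff (f : C -> C) x l :
  cderiv f x l <->
  (forall eps : posreal, exists delta : posreal, forall y,
     Cmod (y - x) < delta -> Cmod (f y - f x - (y - x) * l) <= eps * Cmod (y - x))%R.
Proof.
split.
- intros [_ H] eps.
  specialize (H x (fun P HP => HP) eps).
  apply (@locally_le_locally_norm _ (AbsRing_NormedModule C_AbsRing)) in H.
  destruct H as [d Hd]. exists d. intros y Hy.
  exact (Hd y Hy).
- intros H. split.
  + apply is_linear_scal_l.
  + intros x' Hx'. 
    assert (x' = x) by (symmetry; apply is_filter_lim_locally_unique; exact Hx').
    subst x'. intros eps. apply (@locally_norm_le_locally _ (AbsRing_NormedModule C_AbsRing)).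
    destruct (H eps) as [d Hd]. exists d. intros y Hy.
    exact (Hd y Hy).
Qed.


Definition cdA (f : C -> C) (z : C) (l : C) : Prop :=
  @is_derive C_AbsRing (AbsRing_NormedModule C_AbsRing) f z l.

Lemma cdA_iff (f : C -> C) x l :
  cdA f x l <->
  (forall eps : posreal, exists delta : posreal, forall y,
     Cmod (y - x) < delta -> Cmod (f y - f x - (y - x) * l) <= eps * Cmod (y - x))%R.
Proof.
split.
- intros [_ H] eps.
  specialize (H x (fun P HP => HP) eps).
  apply (@locally_le_locally_norm _ (AbsRing_NormedModule C_AbsRing)) in H.
  destruct H as [d Hd]. exists d. intros y Hy.
  exact (Hd y Hy).
- intros H. split.
  + apply is_linear_scal_l.
  + intros x' Hx'. 
    assert (x' = x) by (symmetry; apply is_filter_lim_locally_unique; exact Hx').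
    subst x'. intros eps. apply (@locally_norm_le_locally _ (AbsRing_NormedModule C_AbsRing)).
    destruct (H eps) as [d Hd]. exists d. intros y Hy.
    exact (Hd y Hy).
Qed.

Lemma cd_A f x l : cderiv f x l <-> cdA f x l.
Proof. rewrite cd_iff, cdA_iff. tauto. Qed.

Lemma cd_plus f g x a b : cderiv f x a -> cderiv g x b -> cderiv (fun z => f z + g z) x (a + b).
Proof. intros Ha Hb. exact (is_derive_plus f g x a b Ha Hb). Qed.

Lemma cd_mult f g x a b : cderiv f x a -> cderiv g x b ->
  cderiv (fun z => f z * g z) x (a * g x + f x * b).
Proof. intros Ha Hb. rewrite cd_A in *. exact (is_derive_mult f g x a b Ha Hb Cmult_comm). Qed.

Lemma cd_const (c : C) x : cderiv (fun _ => c) x 0.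
Proof. exact (is_derive_const c x). Qed.

Lemma cd_id x : cderiv (fun z => z) x 1.
Proof. rewrite cd_A. exact (is_derive_id x). Qed.

Lemma cd_comp f g x a b : cderiv f (g x) a -> cderiv g x b -> cderiv (fun z => f (g z)) x (b * a).
Proof. intros Ha Hb. apply cd_A in Hb. exact (is_derive_comp f g x a b Ha Hb). Qed.

Lemma cd_ext f g x l : (forall z, f z = g z) -> cderiv f x l -> cderiv g x l.
Proof. intros E H. apply (is_derive_ext f g x l E H). Qed.

Lemma cd_eq f x l l' : l = l' -> cderiv f x l -> cderiv f x l'.
Proof. intros ->; auto. Qed.

Lemma cd_cont f x l : cderiv f x l ->
  forall eps : posreal, exists delta : posreal, forall y, (Cmod (y - x) < delta -> Cmod (f y - f x) < eps)%R.
Proof.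
intros H0 eps. pose proof (proj1 (cd_iff f x l) H0) as H. clear H0.
destruct (H (mkposreal 1 Rlt_0_1)) as [d Hd]. simpl in Hd.
assert (Hp : ((0 < Rmin d (eps / (1 + Cmod l + 1)))%R)).
{ apply Rmin_pos. apply cond_pos. apply Rdiv_lt_0_compat. apply cond_pos.
  pose proof (Cmod_ge_0 l); lra. }
exists (mkposreal _ Hp). simpl. intros y Hy.
assert (H1 : (Cmod (y - x) < d)%R) by (eapply Rlt_le_trans; [exact Hy| apply Rmin_l]).
assert (H2 : (Cmod (y - x) < eps / (1 + Cmod l + 1))%R) by (eapply Rlt_le_trans; [exact Hy| apply Rmin_r]).
specialize (Hd y H1).
replace (f y - f x) with ((f y - f x - (y - x) * l) + (y - x) * l) by ring.
eapply Rle_lt_trans. apply Cmod_triangle. rewrite Cmod_mult.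
pose proof (Cmod_ge_0 l). pose proof (Cmod_ge_0 (y - x)).
assert (Cmod (y - x) * (1 + Cmod l + 1) < eps)%R.
{ replace (pos eps) with ((eps / (1 + Cmod l + 1)) * (1 + Cmod l + 1))%R by (field; lra).
  apply Rmult_lt_compat_r; lra. }
nra.
Qed.

Lemma cd_inv (u : C) : u <> 0 -> cderiv (fun z => / z) u (- / (u * u)).
Proof.
intros Hu. apply cd_iff. intros eps.
assert (Hm : ((0 < Cmod u)%R)) by (apply Rnot_le_lt; intro; apply Hu; apply Cmod_eq_0; pose proof (Cmod_ge_0 u); lra).
remember (Cmod u) as m eqn:Em.
assert (Hp : ((0 < Rmin (m/2) (eps * m * m * m / 2))%R)).
{ pose proof (cond_pos eps). apply Rmin_pos. lra. apply Rmult_lt_0_compat. repeat apply Rmult_lt_0_compat; lra. lra. }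
exists (mkposreal _ Hp). simpl. intros y Hy.
assert (H1 : (Cmod (y - u) < m/2)%R) by (eapply Rlt_le_trans; [exact Hy| apply Rmin_l]).
assert (H2 : (Cmod (y - u) < eps * m * m * m / 2)%R) by (eapply Rlt_le_trans; [exact Hy| apply Rmin_r]).
assert (Hy0 : ((m / 2 <= Cmod y)%R)).
{ pose proof (Cmod_triangle y (u - y)). replace (y + (u - y)) with u in H by ring.
  replace (u - y) with (-(y - u)) in H by ring. rewrite Cmod_opp in H. rewrite <- Em in H. lra. }
assert (Hyn : y <> 0). { intro E; subst y. rewrite Cmod_0 in Hy0. lra. }
replace (/ y - / u - (y - u) * - / (u * u)) with ((y - u) * (y - u) / (u * u * y)) by (field; auto).
unfold Cdiv. rewrite !Cmod_mult, Cmod_inv, !Cmod_mult by (repeat apply Cmult_neq_0; auto).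
rewrite <- Em. pose proof (Cmod_ge_0 (y - u)).
apply Rmult_le_reg_r with (m * m * Cmod y)%R. { apply Rmult_lt_0_compat; nra. }
rewrite Rmult_assoc, Rinv_l by (apply Rgt_not_eq; apply Rmult_lt_0_compat; nra).
pose proof (cond_pos eps).
assert (eps * Cmod (y - u) * (m * m * Cmod y) >= eps * Cmod (y-u) * (m*m*(m/2)))%R.
{ apply Rle_ge. apply Rmult_le_compat_l. nra. apply Rmult_le_compat_l; nra. }
nra.
Qed.

Lemma Cmod_le_sum (z : C) : (Cmod z <= Rabs (Re z) + Rabs (Im z))%R.
Proof.
destruct z as [a b]. unfold Cmod, Re, Im; simpl.
rewrite <- (sqrt_Rsqr (Rabs a + Rabs b)) by (pose proof (Rabs_pos a); pose proof (Rabs_pos b); lra).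
apply sqrt_le_1_alt. unfold Rsqr.
pose proof (Rabs_pos a); pose proof (Rabs_pos b).
replace (a * (a * 1) + b * (b * 1))%R with (Rabs a * Rabs a + Rabs b * Rabs b)%R.
nra. rewrite <- !Rabs_mult, !Rabs_right by nra. ring.
Qed.

Lemma Re_le_Cmod (z : C) : (Rabs (Re z) <= Cmod z)%R.
Proof. apply re_le_Cmod. Qed.

Lemma Im_le_Cmod (z : C) : (Rabs (Im z) <= Cmod z)%R.
Proof.
destruct z as [a b]. unfold Cmod, Re, Im; simpl.
rewrite <- sqrt_Rsqr_abs. apply sqrt_le_1_alt. unfold Rsqr. nra.
Qed.

Lemma dpl_eps f x l : derivable_pt_lim f x l ->
  forall eps, (0 < eps)%R -> exists delta, (0 < delta)%R /\ forall h, (Rabs h < delta ->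
    Rabs (f (x + h) - f x - h * l) <= eps * Rabs h)%R.
Proof.
intros H eps Heps. destruct (H eps Heps) as [d Hd].
exists d. split. apply cond_pos. intros h Hh.
destruct (Req_dec h 0) as [->|Hn].
- rewrite Rplus_0_r, Rabs_R0. replace (f x - f x - 0 * l)%R with 0%R by ring. rewrite Rabs_R0. lra.
- specialize (Hd h Hn Hh).
  replace (f (x + h) - f x - h * l)%R with (h * ((f (x + h) - f x) / h - l))%R by (field; auto).
  rewrite Rabs_mult. rewrite Rmult_comm. apply Rmult_le_compat_r. apply Rabs_pos. lra.
Qed.

Lemma Cexp_eq a b : Cexp (a, b) = (exp a * cos b, exp a * sin b)%R.
Proof. unfold Cexp, Cmult, RtoC; simpl. f_equal; ring. Qed.

Lemma Cexp_add z w : Cexp (z + w) = Cexp z * Cexp w.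
Proof.
destruct z as [a b], w as [c d]. unfold Cplus; simpl. rewrite !Cexp_eq.
unfold Cmult; simpl. rewrite exp_plus, cos_plus, sin_plus. f_equal; ring.
Qed.

Lemma Cexp_0 : Cexp 0 = 1.
Proof. unfold RtoC. rewrite Cexp_eq, exp_0, cos_0, sin_0. f_equal; ring. Qed.

Lemma Cmod_Cexp z : Cmod (Cexp z) = exp (Re z).
Proof.
destruct z as [a b]. rewrite Cexp_eq. unfold Cmod; simpl.
replace (exp a * cos b * (exp a * cos b * 1) + exp a * sin b * (exp a * sin b * 1))%R
  with (Rsqr (exp a) * (Rsqr (sin b) + Rsqr (cos b)))%R by (unfold Rsqr; ring).
rewrite sin2_cos2, Rmult_1_r. apply sqrt_Rsqr. left; apply exp_pos.
Qed.

Lemma Cexp_small : forall eps, (0 < eps)%R -> exists delta, (0 < delta)%R /\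
  forall h, (Cmod h < delta -> Cmod (Cexp h - 1 - h) <= eps * Cmod h)%R.
Proof.
intros eps Heps.
set (e := (Rmin eps 1 / 8)%R).
assert (He : (0 < e)%R) by (unfold e; pose proof (Rmin_pos eps 1 Heps Rlt_0_1); lra).
assert (He1 : (e <= 1/8)%R) by (unfold e; pose proof (Rmin_r eps 1); lra).
assert (He2 : (8 * e <= eps)%R) by (unfold e; pose proof (Rmin_l eps 1); lra).
clearbody e.
destruct (dpl_eps exp 0 1 (derivable_pt_lim_exp_0) e He) as [d1 [Hd1 H1]].
assert (Dc : derivable_pt_lim cos 0 0) by (pose proof (derivable_pt_lim_cos 0) as D; rewrite sin_0, Ropp_0 in D; exact D).
assert (Ds : derivable_pt_lim sin 0 1) by (pose proof (derivable_pt_lim_sin 0) as D; rewrite cos_0 in D; exact D).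
destruct (dpl_eps cos 0 0 Dc e He) as [d2 [Hd2 H2]].
destruct (dpl_eps sin 0 1 Ds e He) as [d3 [Hd3 H3]].
exists (Rmin (Rmin d1 d2) (Rmin d3 (Rmin 1 e))).
split. { repeat apply Rmin_pos; lra. }
intros [a b] Hh.
assert (Ha : (Rabs a <= Cmod (a, b))%R) by apply (Re_le_Cmod (a,b)).
assert (Hb : (Rabs b <= Cmod (a, b))%R) by apply (Im_le_Cmod (a,b)).
assert (Hm1 : (Rmin (Rmin d1 d2) (Rmin d3 (Rmin 1 e)) <= d1)%R) by (eapply Rle_trans; apply Rmin_l).
assert (Hm2 : (Rmin (Rmin d1 d2) (Rmin d3 (Rmin 1 e)) <= d2)%R) by (eapply Rle_trans; [apply Rmin_l| apply Rmin_r]).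
assert (Hm3 : (Rmin (Rmin d1 d2) (Rmin d3 (Rmin 1 e)) <= d3)%R) by (eapply Rle_trans; [apply Rmin_r| apply Rmin_l]).
assert (Hm4 : (Rmin (Rmin d1 d2) (Rmin d3 (Rmin 1 e)) <= 1)%R) by (eapply Rle_trans; [apply Rmin_r| eapply Rle_trans; [apply Rmin_r|apply Rmin_l]]).
assert (Hm5 : (Rmin (Rmin d1 d2) (Rmin d3 (Rmin 1 e)) <= e)%R) by (eapply Rle_trans; [apply Rmin_r| eapply Rle_trans; [apply Rmin_r|apply Rmin_r]]).
specialize (H1 a ltac:(lra)). specialize (H2 b ltac:(lra)). specialize (H3 b ltac:(lra)).
rewrite Rplus_0_l, exp_0 in H1. rewrite Rplus_0_l, cos_0 in H2. rewrite Rplus_0_l, sin_0 in H3.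
rewrite Cexp_eq.
eapply Rle_trans. apply Cmod_le_sum. unfold Re, Im; simpl.
set (M := Cmod (a, b)) in *.
replace (exp a * cos b + - (1) + - a)%R with ((exp a - 1 - a * 1) * cos b + (1 + a) * (cos b - 1 - b * 0))%R by ring.
replace (exp a * sin b + - 0 + - b)%R with ((exp a - 1 - a * 1 + a) * sin b + (sin b - 0 - b * 1))%R by ring.
pose proof (COS_bound b). pose proof (SIN_bound b).
assert (Hc : (Rabs (cos b) <= 1)%R) by (apply Rabs_le; lra).
assert (Hsb : (Rabs (sin b) <= Rabs b + e * Rabs b)%R).
{ replace (sin b) with ((sin b - 0 - b * 1) + b)%R by ring.
  eapply Rle_trans. apply Rabs_triang. lra. }
assert (Ta : (Rabs ((exp a - 1 - a * 1) * cos b) <= e * M)%R).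
{ rewrite Rabs_mult. pose proof (Rabs_pos (exp a - 1 - a*1)). pose proof (Rabs_pos (cos b)).
  apply Rle_trans with (Rabs (exp a - 1 - a * 1) * 1)%R. apply Rmult_le_compat_l; lra.
  pose proof (Rabs_pos a). nra. }
assert (Tb : (Rabs ((1 + a) * (cos b - 1 - b * 0)) <= 2 * e * M)%R).
{ rewrite Rabs_mult. pose proof (Rabs_pos (cos b - 1 - b*0)).
  assert (Rabs (1 + a) <= 2)%R. { eapply Rle_trans. apply Rabs_triang. rewrite Rabs_R1. lra. }
  pose proof (Rabs_pos b). pose proof (Rabs_pos (1 + a)). nra. }
assert (Tc : (Rabs ((exp a - 1 - a * 1 + a) * sin b) <= 4 * e * M)%R).
{ rewrite Rabs_mult.
  assert (Rabs (exp a - 1 - a * 1 + a) <= e * Rabs a + Rabs a)%R. { eapply Rle_trans. apply Rabs_triang. lra. }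
  pose proof (Rabs_pos (sin b)). pose proof (Rabs_pos a). pose proof (Rabs_pos b).
  pose proof (Rabs_pos (exp a - 1 - a * 1 + a)).
  assert (Rabs a <= e)%R by lra.
  apply Rle_trans with ((2 * Rabs a) * (2 * Rabs b))%R.
  apply Rmult_le_compat; nra.
  assert (Rabs a * Rabs b <= e * M)%R.
  { apply Rle_trans with (e * Rabs b)%R. apply Rmult_le_compat_r; lra. apply Rmult_le_compat_l; lra. }
  nra. }
assert (Td : (Rabs (sin b - 0 - b * 1) <= e * M)%R).
{ pose proof (Rabs_pos b). nra. }
pose proof (Rabs_triang ((exp a - 1 - a * 1) * cos b) ((1 + a) * (cos b - 1 - b * 0))).
pose proof (Rabs_triang ((exp a - 1 - a * 1 + a) * sin b) (sin b - 0 - b * 1)).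
pose proof (Rabs_pos a). assert (0 <= M)%R by lra. nra.
Qed.

Lemma cd_Cexp z : cderiv Cexp z (Cexp z).
Proof.
apply cd_iff. intros eps.
pose proof (Cmod_ge_0 (Cexp z)).
destruct (Cexp_small (eps / (Cmod (Cexp z) + 1)) ltac:(apply Rdiv_lt_0_compat; [apply cond_pos|lra])) as [d [Hd Hs]].
exists (mkposreal d Hd). simpl. intros y Hy.
replace y with (z + (y - z)) at 1 by ring.
rewrite Cexp_add.
replace (Cexp z * Cexp (y - z) - Cexp z - (y - z) * Cexp z) with (Cexp z * (Cexp (y - z) - 1 - (y - z))) by ring.
rewrite Cmod_mult. specialize (Hs _ Hy).
pose proof (Cmod_ge_0 (y - z)). pose proof (cond_pos eps).
apply Rle_trans with (Cmod (Cexp z) * (eps / (Cmod (Cexp z) + 1) * Cmod (y - z)))%R.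
apply Rmult_le_compat_l; lra.
rewrite <- Rmult_assoc. apply Rmult_le_compat_r. lra.
apply Rle_trans with ((Cmod (Cexp z) + 1) * (eps / (Cmod (Cexp z) + 1)))%R.
apply Rmult_le_compat_r. apply Rlt_le, Rdiv_lt_0_compat; lra. lra.
right. field. lra.
Qed.

Definition CLog (u : C) : C := (ln (Cmod u), atan (Im u / Re u)).

Lemma Cmod_pos_of_Re (u : C) : (0 < Re u)%R -> (0 < Cmod u)%R.
Proof. intros H. pose proof (Re_le_Cmod u). pose proof (Rle_abs (Re u)). lra. Qed.

Lemma Cexp_CLog u : (0 < Re u)%R -> Cexp (CLog u) = u.
Proof.
intros H. destruct u as [a b]. unfold CLog. simpl in *.
pose proof (Cmod_pos_of_Re (a,b) H) as Hm.
rewrite Cexp_eq, exp_ln by exact Hm. rewrite cos_atan, sin_atan.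
assert (E : sqrt (1 + (b / a)²) = (Cmod (a, b) / a)%R).
{ apply sqrt_lem_1. unfold Rsqr. pose proof (Rle_0_sqr (b/a)). unfold Rsqr in *. lra.
  apply Rlt_le, Rdiv_lt_0_compat; lra.
  assert (Hs : (Cmod (a,b) * Cmod (a,b) = a * a + b * b)%R).
  { unfold Cmod; simpl. rewrite sqrt_sqrt. ring. nra. }
  unfold Rsqr. replace (Cmod (a, b) / a * (Cmod (a, b) / a))%R with ((Cmod (a, b) * Cmod (a, b)) / (a * a))%R by (field; lra).
  rewrite Hs. field. lra. }
rewrite E. f_equal; field; split; lra.
Qed.

Lemma CLog_Cexp v : (Rabs (Im v) < PI / 2)%R -> CLog (Cexp v) = v.
Proof.
intros H. destruct v as [a b]. simpl in H. unfold CLog.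
rewrite Cmod_Cexp. rewrite Cexp_eq. simpl. rewrite ln_exp.
assert (Hc : (0 < cos b)%R) by (apply cos_gt_0; apply Rabs_def2 in H; lra).
replace (exp a * sin b / (exp a * cos b))%R with (tan b).
rewrite atan_tan by (apply Rabs_def2 in H; lra). reflexivity.
unfold tan. field. split; [lra| pose proof (exp_pos a); lra].
Qed.

Lemma CLog_1 : CLog 1 = 0.
Proof. unfold CLog. simpl. rewrite Cmod_1. rewrite ln_1. unfold Rdiv. rewrite Rmult_0_l, atan_0. reflexivity. Qed.

Lemma Im_CLog_bound u : (Rabs (Im (CLog u)) < PI / 2)%R.
Proof. unfold CLog; simpl. pose proof (atan_bound (Im u / Re u)). apply Rabs_def1; lra. Qed.

Lemma Cmod_diff_le (y u : C) : (Rabs (Cmod y - Cmod u) <= Cmod (y - u))%R.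
Proof.
apply Rabs_le. split.
- pose proof (Cmod_triangle u (y - u)). replace (u + (y - u)) with y in H by ring.
  replace (u - y) with (- (y - u)) in * by ring. 
  pose proof (Cmod_triangle y (u - y)). replace (y + (u - y)) with u in H0 by ring.
  replace (u - y) with (- (y - u)) in H0 by ring. rewrite Cmod_opp in H0. lra.
- pose proof (Cmod_triangle u (y - u)). replace (u + (y - u)) with y in H by ring. lra.
Qed.

Lemma CLog_cont u : (0 < Re u)%R -> forall eps, (0 < eps)%R -> exists delta, (0 < delta)%R /\
  forall y, (Cmod (y - u) < delta -> Cmod (CLog y - CLog u) < eps)%R.
Proof.
intros Hu eps Heps.
destruct u as [a b]; simpl in Hu.
set (m := Cmod (a,b)).
assert (Hm : (0 < m)%R) by (apply (Cmod_pos_of_Re (a,b)); exact Hu).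
destruct (dpl_eps ln m (/ m) (derivable_pt_lim_ln m Hm) 1 Rlt_0_1) as [d1 [Hd1 H1]].
destruct (dpl_eps atan (b / a) _ (derivable_pt_lim_atan (b/a)) 1 Rlt_0_1) as [d2 [Hd2 H2]].
set (K := (1 + / m)%R).
assert (HK : (0 < K)%R) by (unfold K; pose proof (Rinv_0_lt_compat m Hm); lra).
set (q := (a * a / (2 * (Rabs b + a + 1)))%R).
assert (Hq : (0 < q)%R) by (unfold q; pose proof (Rabs_pos b); apply Rdiv_lt_0_compat; nra).
set (del := Rmin (Rmin (Rmin d1 (a/2)) (eps / (2 * K))) (Rmin (d2 * q) (q * eps / 4))).
assert (Hdel : (0 < del)%R).
{ unfold del. repeat apply Rmin_pos; try lra.
  apply Rdiv_lt_0_compat; lra. nra. nra. }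
exists del. split; auto.
intros [c d] Hy.
assert (Hc : (Rabs (c - a) <= Cmod ((c, d) - (a, b)))%R) by apply (Re_le_Cmod ((c,d) - (a,b))).
assert (Hd : (Rabs (d - b) <= Cmod ((c, d) - (a, b)))%R) by apply (Im_le_Cmod ((c,d) - (a,b))).
assert (Hr := Cmod_diff_le (c,d) (a,b)).
set (r := Cmod ((c, d) - (a, b))) in *.
assert (L1 := Rmin_l (Rmin (Rmin d1 (a/2)) (eps / (2 * K))) (Rmin (d2 * q) (q * eps / 4))).
assert (L2 := Rmin_r (Rmin (Rmin d1 (a/2)) (eps / (2 * K))) (Rmin (d2 * q) (q * eps / 4))).
assert (L3 := Rmin_l (Rmin d1 (a/2)) (eps / (2 * K))).
assert (L4 := Rmin_r (Rmin d1 (a/2)) (eps / (2 * K))).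
assert (L5 := Rmin_l d1 (a/2)). assert (L6 := Rmin_r d1 (a/2)).
assert (L7 := Rmin_l (d2 * q) (q * eps / 4)). assert (L8 := Rmin_r (d2 * q) (q * eps / 4)).
fold del in L1, L2.
assert (Hca : (a / 2 < c)%R) by (pose proof (Rle_abs (-(c - a))); rewrite Rabs_Ropp in *; lra).
assert (Hre : (Rabs (ln (Cmod (c, d)) - ln m) < eps / 2)%R).
{ set (h := (Cmod (c,d) - m)%R).
  assert (Hh : (Rabs h < d1)%R) by (unfold h, m; lra).
  specialize (H1 h Hh). replace (m + h)%R with (Cmod (c,d)) in H1 by (unfold h; ring).
  assert (Rabs (ln (Cmod (c, d)) - ln m) <= K * Rabs h)%R.
  { replace (ln (Cmod (c, d)) - ln m)%R with ((ln (Cmod (c, d)) - ln m - h * / m) + h * / m)%R by ring.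
    eapply Rle_trans. apply Rabs_triang. rewrite Rabs_mult, (Rabs_right (/ m)) by (left; apply Rinv_0_lt_compat; lra).
    unfold K. lra. }
  assert (K * Rabs h <= K * r)%R by (apply Rmult_le_compat_l; [lra| unfold h, m; lra]).
  assert (K * r < eps / 2)%R.
  { assert (r < eps / (2 * K))%R by lra.
    apply Rmult_lt_compat_l with (r := K) in H3; [|lra].
    replace (K * (eps / (2 * K)))%R with (eps / 2)%R in H3 by (field; lra). lra. }
  lra. }
assert (Hst : (Rabs (d / c - b / a) <= r / q)%R).
{ replace (d / c - b / a)%R with (((d - b) * a - b * (c - a)) / (a * c))%R by (field; lra).
  unfold Rdiv at 1. rewrite Rabs_mult, (Rabs_right (/ (a * c))) by (left; apply Rinv_0_lt_compat; nra).
  assert (Rabs ((d - b) * a - b * (c - a)) <= r * a + Rabs b * r)%R.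
  { unfold Rminus at 1. eapply Rle_trans. apply Rabs_triang. rewrite Rabs_Ropp, !Rabs_mult, (Rabs_right a) by lra.
    pose proof (Rabs_pos b). pose proof (Rabs_pos (d - b)). pose proof (Rabs_pos (c - a)). nra. }
  apply Rle_trans with ((r * a + Rabs b * r) * / (a * c))%R.
  apply Rmult_le_compat_r. left; apply Rinv_0_lt_compat; nra. exact H.
  unfold q. pose proof (Rabs_pos b). pose proof (Rabs_pos (d - b)).
  assert (0 <= r)%R by lra.
  apply Rle_trans with ((r * a + Rabs b * r) * / (a * (a / 2)))%R.
  apply Rmult_le_compat_l. nra. apply Rinv_le_contravar; nra.
  replace ((r * a + Rabs b * r) * / (a * (a / 2)))%R with (r * (2 * (a + Rabs b)) / (a * a))%R by (field; lra).
  replace (r / (a * a / (2 * (Rabs b + a + 1))))%R with (r * (2 * (Rabs b + a + 1)) / (a * a))%R by (field; lra).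
  unfold Rdiv. apply Rmult_le_compat_r. left; apply Rinv_0_lt_compat; nra. nra. }
assert (Hst2 : (Rabs (d / c - b / a) < d2)%R).
{ eapply Rle_lt_trans. exact Hst. apply (Rmult_lt_reg_r q); [lra|]. unfold Rdiv. rewrite Rmult_assoc, Rinv_l by lra. lra. }
assert (Hst3 : (Rabs (d / c - b / a) <= eps / 4)%R).
{ eapply Rle_trans. exact Hst. apply (Rmult_le_reg_r q); [lra|]. unfold Rdiv. rewrite Rmult_assoc, Rinv_l by lra. lra. }
assert (Him : (Rabs (atan (d / c) - atan (b / a)) <= eps / 2)%R).
{ specialize (H2 _ Hst2). replace (b / a + (d / c - b / a))%R with (d / c)%R in H2 by ring.
  set (h := (d / c - b / a)%R) in *.
  replace (atan (d / c) - atan (b / a))%R with ((atan (d / c) - atan (b / a) - h * / (1 + (b / a) ^ 2)) + h * / (1 + (b / a) ^ 2))%R by ring.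
  eapply Rle_trans. apply Rabs_triang. rewrite Rabs_mult.
  assert (0 < 1 + (b / a) ^ 2)%R by (pose proof (pow2_ge_0 (b/a)); lra).
  assert (Rabs (/ (1 + (b / a) ^ 2)) <= 1)%R.
  { rewrite Rabs_right by (left; apply Rinv_0_lt_compat; lra). rewrite <- Rinv_1. apply Rinv_le_contravar. lra. pose proof (pow2_ge_0 (b/a)); lra. }
  pose proof (Rabs_pos h). pose proof (Rabs_pos (/ (1 + (b / a) ^ 2))). nra. }
unfold CLog. simpl. fold m.
eapply Rle_lt_trans. apply Cmod_le_sum. simpl.
replace (ln (Cmod (c, d)) + - ln m)%R with (ln (Cmod (c, d)) - ln m)%R by ring.
replace (atan (d / c) + - atan (b / a))%R with (atan (d / c) - atan (b / a))%R by ring.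
lra.
Qed.

Lemma Cmod_pos (u : C) : u <> 0 -> (0 < Cmod u)%R.
Proof. intros H. pose proof (Cmod_ge_0 u). destruct (Rle_lt_or_eq_dec _ _ H0); auto. exfalso; apply H, Cmod_eq_0; auto. Qed.

Lemma Re_ne0 (u : C) : (0 < Re u)%R -> u <> 0.
Proof. intros H E; subst u. simpl in H. lra. Qed.

Lemma cd_CLog u : (0 < Re u)%R -> cderiv CLog u (/ u).
Proof.
intros Hu. apply cd_iff. intros eps.
assert (Hm : (0 < Cmod u)%R) by (apply Cmod_pos_of_Re; auto).
pose proof (cond_pos eps) as He.
set (e' := Rmin (1/2) (eps * Cmod u / 2)).
assert (He' : (0 < e')%R) by (unfold e'; apply Rmin_pos; nra).
destruct (Cexp_small e' He') as [d1 [Hd1 Hs]].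
destruct (CLog_cont u Hu d1 Hd1) as [d2 [Hd2 Hc]].
assert (Hp : (0 < Rmin d2 (Re u))%R) by (apply Rmin_pos; lra).
exists (mkposreal _ Hp). simpl. intros y Hy.
assert (Hy1 : (Cmod (y - u) < d2)%R) by (eapply Rlt_le_trans; [exact Hy| apply Rmin_l]).
assert (Hy2 : (Cmod (y - u) < Re u)%R) by (eapply Rlt_le_trans; [exact Hy| apply Rmin_r]).
assert (Hyr : (0 < Re y)%R).
{ pose proof (Re_le_Cmod (y - u)). pose proof (Rle_abs (- (Re (y - u)))). rewrite Rabs_Ropp in H0.
  replace (Re y) with (Re u + Re (y - u))%R by (destruct y, u; simpl; ring). lra. }
set (k := CLog y - CLog u).
assert (Hk : (Cmod k < d1)%R) by (apply Hc; auto).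
specialize (Hs k Hk).
assert (Ey : y - u = u * (Cexp k - 1)).
{ assert (Cexp (CLog u + k) = y) by (unfold k; replace (CLog u + (CLog y - CLog u)) with (CLog y) by ring; apply Cexp_CLog; auto).
  rewrite Cexp_add, Cexp_CLog in H by auto. rewrite <- H. ring. }
assert (Hun : u <> 0) by (apply Re_ne0; auto).
assert (EE : k - (y - u) * / u = - (Cexp k - 1 - k)).
{ rewrite Ey. field. auto. }
rewrite EE, Cmod_opp.
assert (Hk2 : (Cmod k * Cmod u <= 2 * Cmod (y - u))%R).
{ rewrite Ey, Cmod_mult.
  assert (Cmod k <= Cmod (Cexp k - 1) + Cmod (Cexp k - 1 - k))%R.
  { pose proof (Cmod_triangle (Cexp k - 1) (- (Cexp k - 1 - k))). rewrite Cmod_opp in H.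
    replace (Cexp k - 1 + - (Cexp k - 1 - k)) with k in H by ring. exact H. }
  assert (e' <= 1/2)%R by (unfold e'; apply Rmin_l).
  pose proof (Cmod_ge_0 k). pose proof (Cmod_ge_0 (Cexp k - 1)).
  assert (e' * Cmod k <= 1/2 * Cmod k)%R by (apply Rmult_le_compat_r; lra).
  assert (Cmod k <= 2 * Cmod (Cexp k - 1))%R by lra.
  rewrite Rmult_comm. replace (2 * (Cmod u * Cmod (Cexp k - 1)))%R with (Cmod u * (2 * Cmod (Cexp k - 1)))%R by ring.
  apply Rmult_le_compat_l; lra. }
assert (e' <= eps * Cmod u / 2)%R by (unfold e'; apply Rmin_r).
pose proof (Cmod_ge_0 k).
apply Rle_trans with (e' * Cmod k)%R; auto.
apply Rle_trans with (eps * Cmod u / 2 * Cmod k)%R. apply Rmult_le_compat_r; auto.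
nra.
Qed.

Definition rd (g : R -> C) (t : R) (l : C) : Prop :=
  forall eps, (0 < eps)%R -> exists delta, (0 < delta)%R /\ forall h : R,
    (Rabs h < delta -> Cmod (g (t + h)%R - g t - RtoC h * l) <= eps * Rabs h)%R.

Lemma eps_to_dpl (f : R -> R) x l :
  (forall eps, (0 < eps)%R -> exists delta, (0 < delta)%R /\ forall h : R,
    (Rabs h < delta -> Rabs (f (x + h) - f x - h * l) <= eps * Rabs h)%R) ->
  derivable_pt_lim f x l.
Proof.
intros H eps Heps. destruct (H (eps/2)%R ltac:(lra)) as [d [Hd Hh]].
exists (mkposreal d Hd). intros h Hn Hlt. simpl in Hlt.
specialize (Hh h Hlt).
replace ((f (x + h) - f x) / h - l)%R with ((f (x + h) - f x - h * l) / h)%R by (field; auto).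
unfold Rdiv. rewrite Rabs_mult, Rabs_inv.
apply Rle_lt_trans with (eps/2)%R; [|lra].
apply Rmult_le_reg_r with (Rabs h). apply Rabs_pos_lt; auto.
rewrite Rmult_assoc, Rinv_l by (apply Rgt_not_eq, Rabs_pos_lt; auto).
pose proof (Rabs_pos_lt h Hn). nra.
Qed.

Lemma rd_Re g t l : rd g t l -> derivable_pt_lim (fun s => Re (g s)) t (Re l).
Proof.
intros H. apply eps_to_dpl. intros eps He. destruct (H eps He) as [d [Hd Hh]].
exists d; split; auto. intros h Hlt. specialize (Hh h Hlt).
eapply Rle_trans; [|exact Hh]. eapply Rle_trans; [|apply Re_le_Cmod].
right. f_equal. destruct (g (t+h)%R), (g t), l; simpl. ring.
Qed.

Lemma rd_Im g t l : rd g t l -> derivable_pt_lim (fun s => Im (g s)) t (Im l).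
Proof.
intros H. apply eps_to_dpl. intros eps He. destruct (H eps He) as [d [Hd Hh]].
exists d; split; auto. intros h Hlt. specialize (Hh h Hlt).
eapply Rle_trans; [|exact Hh]. eapply Rle_trans; [|apply Im_le_Cmod].
right. f_equal. destruct (g (t+h)%R), (g t), l; simpl. ring.
Qed.

Lemma rd_of_comp g t l : derivable_pt_lim (fun s => Re (g s)) t (Re l) ->
  derivable_pt_lim (fun s => Im (g s)) t (Im l) -> rd g t l.
Proof.
intros H1 H2 eps He.
destruct (dpl_eps _ _ _ H1 (eps/2) ltac:(lra)) as [d1 [Hd1 E1]].
destruct (dpl_eps _ _ _ H2 (eps/2) ltac:(lra)) as [d2 [Hd2 E2]].
exists (Rmin d1 d2). split. apply Rmin_pos; auto. intros h Hh.
assert (Rabs h < d1)%R by (eapply Rlt_le_trans; [exact Hh|apply Rmin_l]).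
assert (Rabs h < d2)%R by (eapply Rlt_le_trans; [exact Hh|apply Rmin_r]).
specialize (E1 h H). specialize (E2 h H0).
eapply Rle_trans. apply Cmod_le_sum.
replace (Re (g (t + h)%R - g t - h * l)) with (Re (g (t + h)%R) - Re (g t) - h * Re l)%R by (destruct (g (t+h)%R), (g t), l; simpl; ring).
replace (Im (g (t + h)%R - g t - h * l)) with (Im (g (t + h)%R) - Im (g t) - h * Im l)%R by (destruct (g (t+h)%R), (g t), l; simpl; ring).
lra.
Qed.

Lemma rd_lip g t l : rd g t l -> exists delta, (0 < delta)%R /\ forall h : R,
  (Rabs h < delta -> Cmod (g (t + h)%R - g t) <= (Cmod l + 1) * Rabs h)%R.
Proof.
intros H. destruct (H 1%R Rlt_0_1) as [d [Hd Hh]]. exists d; split; auto.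
intros h Hl. specialize (Hh h Hl).
replace (g (t + h)%R - g t) with ((g (t + h)%R - g t - h * l) + h * l) by ring.
eapply Rle_trans. apply Cmod_triangle. rewrite Cmod_mult, Cmod_R. 
pose proof (Rabs_pos h). nra.
Qed.

Lemma rd_chain (f : C -> C) g t a l : cderiv f (g t) a -> rd g t l -> rd (fun s => f (g s)) t (a * l).
Proof.
intros Hf Hg eps He.
pose proof (proj1 (cd_iff f (g t) a) Hf) as Hf'.
destruct (rd_lip g t l Hg) as [d0 [Hd0 Hl]].
set (K := (Cmod l + 1)%R). assert (HK : (0 < K)%R) by (unfold K; pose proof (Cmod_ge_0 l); lra).
set (Ka := (Cmod a + 1)%R). assert (HKa : (0 < Ka)%R) by (unfold Ka; pose proof (Cmod_ge_0 a); lra).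
destruct (Hf' (mkposreal (eps / (2 * K)) ltac:(apply Rdiv_lt_0_compat; lra))) as [d1 Hd1]. simpl in Hd1.
destruct (Hg (eps / (2 * Ka))%R ltac:(apply Rdiv_lt_0_compat; lra)) as [d2 [Hd2 Hg2]].
assert (Hp : (0 < Rmin (Rmin d0 d2) (d1 / K))%R) by (repeat apply Rmin_pos; try lra; apply Rdiv_lt_0_compat; [apply cond_pos|lra]).
exists (Rmin (Rmin d0 d2) (d1 / K)). split; auto. intros h Hh.
assert (h0 : (Rabs h < d0)%R) by (eapply Rlt_le_trans; [exact Hh|]; eapply Rle_trans; apply Rmin_l).
assert (h2 : (Rabs h < d2)%R) by (eapply Rlt_le_trans; [exact Hh|]; eapply Rle_trans; [apply Rmin_l|apply Rmin_r]).
assert (h1 : (Rabs h < d1 / K)%R) by (eapply Rlt_le_trans; [exact Hh|]; apply Rmin_r).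
specialize (Hl h h0). specialize (Hg2 h h2). change (Cmod l + 1)%R with K in Hl.
assert (Hgd : (Cmod (g (t + h)%R - g t) < d1)%R).
{ eapply Rle_lt_trans. exact Hl. apply Rmult_lt_reg_r with (/ K)%R. apply Rinv_0_lt_compat; lra.
  replace (K * Rabs h * / K)%R with (Rabs h) by (field; lra). exact h1. }
specialize (Hd1 _ Hgd).
replace (f (g (t + h)%R) - f (g t) - h * (a * l)) with
  ((f (g (t + h)%R) - f (g t) - (g (t + h)%R - g t) * a) + a * (g (t + h)%R - g t - h * l)) by ring.
eapply Rle_trans. apply Cmod_triangle. rewrite Cmod_mult.
pose proof (Cmod_ge_0 a). pose proof (Rabs_pos h).
assert (A1 : (eps / (2 * K) * Cmod (g (t + h)%R - g t) <= eps / 2 * Rabs h)%R).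
{ apply Rle_trans with (eps / (2 * K) * (K * Rabs h))%R.
  apply Rmult_le_compat_l. apply Rlt_le, Rdiv_lt_0_compat; lra. exact Hl.
  right. field. lra. }
assert (A2 : (Cmod a * Cmod (g (t + h)%R - g t - h * l) <= eps / 2 * Rabs h)%R).
{ apply Rle_trans with (Cmod a * (eps / (2 * Ka) * Rabs h))%R.
  apply Rmult_le_compat_l; auto.
  apply Rle_trans with (Ka * (eps / (2 * Ka) * Rabs h))%R.
  apply Rmult_le_compat_r. apply Rmult_le_pos. apply Rlt_le, Rdiv_lt_0_compat; lra. lra. unfold Ka; lra.
  right. field. lra. }
lra.
Qed.

Lemma rd_mult g1 g2 t l1 l2 : rd g1 t l1 -> rd g2 t l2 ->
  rd (fun s => g1 s * g2 s) t (l1 * g2 t + g1 t * l2).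
Proof.
intros H1 H2 eps He.
destruct (rd_lip g1 t l1 H1) as [d0 [Hd0 Hl]].
set (K := (Cmod l1 + 1)%R). assert (HK : (0 < K)%R) by (unfold K; pose proof (Cmod_ge_0 l1); lra).
set (A := (Cmod (g2 t) + 1)%R). assert (HA : (0 < A)%R) by (unfold A; pose proof (Cmod_ge_0 (g2 t)); lra).
set (B := (Cmod (g1 t) + 1)%R). assert (HB : (0 < B)%R) by (unfold B; pose proof (Cmod_ge_0 (g1 t)); lra).
set (L2 := (Cmod l2 + 1)%R). assert (HL2 : (0 < L2)%R) by (unfold L2; pose proof (Cmod_ge_0 l2); lra).
destruct (H1 (eps / (3 * A))%R ltac:(apply Rdiv_lt_0_compat; lra)) as [d1 [Hd1 E1]].
destruct (H2 (eps / (3 * B))%R ltac:(apply Rdiv_lt_0_compat; lra)) as [d2 [Hd2 E2]].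
destruct (rd_lip g2 t l2 H2) as [d3 [Hd3 Hl3]].
set (d4 := (eps / (3 * K * L2))%R). assert (Hd4 : (0 < d4)%R) by (unfold d4; apply Rdiv_lt_0_compat; nra).
exists (Rmin (Rmin d0 d1) (Rmin d2 (Rmin d3 d4))). split. repeat apply Rmin_pos; lra.
intros h Hh.
assert (h0 : (Rabs h < d0)%R) by (eapply Rlt_le_trans; [exact Hh|]; eapply Rle_trans; apply Rmin_l).
assert (h1 : (Rabs h < d1)%R) by (eapply Rlt_le_trans; [exact Hh|]; eapply Rle_trans; [apply Rmin_l|apply Rmin_r]).
assert (h2 : (Rabs h < d2)%R) by (eapply Rlt_le_trans; [exact Hh|]; eapply Rle_trans; [apply Rmin_r|apply Rmin_l]).
assert (h3 : (Rabs h < d3)%R) by (eapply Rlt_le_trans; [exact Hh|]; eapply Rle_trans; [apply Rmin_r|]; eapply Rle_trans; [apply Rmin_r|apply Rmin_l]).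
assert (h4 : (Rabs h < d4)%R) by (eapply Rlt_le_trans; [exact Hh|]; eapply Rle_trans; [apply Rmin_r|]; eapply Rle_trans; [apply Rmin_r|apply Rmin_r]).
specialize (Hl h h0). specialize (E1 h h1). specialize (E2 h h2). specialize (Hl3 h h3).
set (u1 := g1 (t + h)%R - g1 t) in *. set (u2 := g2 (t + h)%R - g2 t) in *.
replace (g1 (t + h)%R * g2 (t + h)%R - g1 t * g2 t - h * (l1 * g2 t + g1 t * l2)) with
  ((u1 - h * l1) * g2 t + g1 t * (u2 - h * l2) + u1 * u2) by (unfold u1, u2; ring).
eapply Rle_trans. apply Cmod_triangle. eapply Rle_trans. apply Rplus_le_compat_r. apply Cmod_triangle.
rewrite !Cmod_mult.
pose proof (Rabs_pos h). pose proof (Cmod_ge_0 (g2 t)). pose proof (Cmod_ge_0 (g1 t)).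
pose proof (Cmod_ge_0 u1). pose proof (Cmod_ge_0 u2).
assert (T1 : (Cmod (u1 - h * l1) * Cmod (g2 t) <= eps / 3 * Rabs h)%R).
{ apply Rle_trans with (eps / (3 * A) * Rabs h * A)%R.
  apply Rmult_le_compat; try lra. apply Cmod_ge_0. unfold A; lra. right; field; lra. }
assert (T2 : (Cmod (g1 t) * Cmod (u2 - h * l2) <= eps / 3 * Rabs h)%R).
{ apply Rle_trans with (B * (eps / (3 * B) * Rabs h))%R.
  apply Rmult_le_compat; try lra. apply Cmod_ge_0. unfold B; lra. right; field; lra. }
assert (T3 : (Cmod u1 * Cmod u2 <= eps / 3 * Rabs h)%R).
{ apply Rle_trans with ((K * Rabs h) * (L2 * Rabs h))%R. apply Rmult_le_compat; auto.
  apply Rle_trans with ((K * L2 * d4) * Rabs h)%R.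
  replace (K * Rabs h * (L2 * Rabs h))%R with ((K * L2 * Rabs h) * Rabs h)%R by ring.
  apply Rmult_le_compat_r; auto. apply Rmult_le_compat_l; nra.
  right. unfold d4. field. nra. }
lra.
Qed.

Lemma rd_const (c : C) t : rd (fun _ => c) t 0.
Proof.
intros eps He. exists 1%R. split. lra. intros h _.
replace (c - c - h * 0) with (RtoC 0) by ring. rewrite Cmod_0. pose proof (Rabs_pos h). nra.
Qed.

Lemma rd_ext g1 g2 t l : (forall s, g1 s = g2 s) -> rd g1 t l -> rd g2 t l.
Proof. intros E H eps He. destruct (H eps He) as [d [Hd Hh]]. exists d; split; auto. intros h Hl. rewrite <- !E. auto. Qed.

Lemma rd_eq g t l l' : l = l' -> rd g t l -> rd g t l'.
Proof. intros ->; auto. Qed.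

Lemma left_max_deriv (k : R -> R) r l delta : (0 < delta)%R -> derivable_pt_lim k r l ->
  (forall s, (r - delta < s < r)%R -> (k s <= k r)%R) -> (0 <= l)%R.
Proof.
intros Hd Hk Hm. apply Rnot_lt_le. intro Hl.
destruct (Hk (- l)%R ltac:(lra)) as [d Hdd].
set (h := (- Rmin (d/2) (delta/2))%R).
assert (Hh1 : (h < 0)%R) by (unfold h; pose proof (Rmin_pos (d/2) (delta/2) ltac:(pose proof (cond_pos d); lra) ltac:(lra)); lra).
assert (Hh2 : (Rabs h < d)%R) by (unfold h; rewrite Rabs_Ropp, Rabs_right by (apply Rle_ge, Rlt_le, Rmin_pos; [pose proof (cond_pos d); lra|lra]); pose proof (Rmin_l (d/2) (delta/2)); pose proof (cond_pos d); lra).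
assert (Hh3 : (- delta < h)%R) by (unfold h; pose proof (Rmin_r (d/2) (delta/2)); lra).
specialize (Hdd h ltac:(lra) Hh2).
specialize (Hm (r + h)%R ltac:(lra)).
apply Rabs_def2 in Hdd. destruct Hdd as [Hdd _].
assert ((k (r + h) - k r) / h >= 0)%R.
{ unfold Rdiv. replace ((k (r + h) - k r) * / h)%R with ((k r - k (r + h)) * / (- h))%R by (field; lra).
  apply Rle_ge, Rmult_le_pos; [lra| left; apply Rinv_0_lt_compat; lra]. }
lra.
Qed.

Lemma right_max_deriv (k : R -> R) r l delta : (0 < delta)%R -> derivable_pt_lim k r l ->
  (forall s, (r < s < r + delta)%R -> (k s <= k r)%R) -> (l <= 0)%R.
Proof.
intros Hd Hk Hm.
set (k' := fun s => k (2 * r - s)%R).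
assert (Hk' : derivable_pt_lim k' r (- l)%R).
{ unfold k'. replace (- l)%R with (l * (-1))%R by ring.
  apply (derivable_pt_lim_comp (fun s => 2 * r - s)%R k). 
  replace (-1)%R with (0 - 1)%R by ring. apply derivable_pt_lim_minus. apply derivable_pt_lim_const. apply derivable_pt_lim_id.
  replace (2 * r - r)%R with r by ring. exact Hk. }
assert (0 <= - l)%R.
{ apply (left_max_deriv k' r (- l) delta Hd Hk'). intros s Hs. unfold k'.
  replace (2 * r - r)%R with r by ring. apply Hm. lra. }
lra.
Qed.

Lemma max_deriv0 (f f1 : R -> R) t0 delta : (0 < delta)%R ->
  derivable_pt_lim f t0 (f1 t0) ->
  (forall s, (Rabs (s - t0) < delta)%R -> (f s <= f t0)%R) -> f1 t0 = 0%R.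
Proof.
intros Hd Hder Hm. apply Rle_antisym.
- apply (right_max_deriv f t0 (f1 t0) delta Hd Hder). intros s Hs. apply Hm. rewrite Rabs_right; lra.
- apply (left_max_deriv f t0 (f1 t0) delta Hd Hder). intros s Hs. apply Hm. rewrite Rabs_left; lra.
Qed.

Lemma max_deriv2 (f f1 : R -> R) t0 f2 delta : (0 < delta)%R ->
  (forall s, (Rabs (s - t0) < delta)%R -> derivable_pt_lim f s (f1 s)) ->
  derivable_pt_lim f1 t0 f2 ->
  (forall s, (Rabs (s - t0) < delta)%R -> (f s <= f t0)%R) -> (f2 <= 0)%R.
Proof.
intros Hd Hder H2 Hm.
assert (H0 : f1 t0 = 0%R) by (apply (max_deriv0 f f1 t0 delta Hd); auto; apply Hder; rewrite Rminus_diag, Rabs_R0; lra).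
apply Rnot_lt_le. intro Hl.
destruct (H2 f2 Hl) as [d Hdd].
set (h := Rmin (d/2) (delta/2)).
assert (Hh1 : (0 < h)%R) by (unfold h; apply Rmin_pos; [pose proof (cond_pos d); lra|lra]).
assert (Hh2 : (h < d)%R) by (unfold h; pose proof (Rmin_l (d/2) (delta/2)); pose proof (cond_pos d); lra).
assert (Hh3 : (h < delta)%R) by (unfold h; pose proof (Rmin_r (d/2) (delta/2)); lra).
destruct (MVT_cor2 f f1 t0 (t0 + h)%R ltac:(lra)) as [c [Ec Hc]].
{ intros c Hc. apply Hder. apply Rabs_def1; lra. }
assert (Hpos : (0 < f1 c)%R).
{ specialize (Hdd (c - t0)%R ltac:(lra) ltac:(rewrite Rabs_right; lra)).
  replace (t0 + (c - t0))%R with c in Hdd by ring. rewrite H0 in Hdd.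
  apply Rabs_def2 in Hdd. destruct Hdd as [_ Hdd].
  assert (0 < (f1 c - 0) / (c - t0))%R by lra.
  unfold Rdiv in H. replace (f1 c - 0)%R with (f1 c) in H by ring.
  apply Rmult_lt_reg_r with (/ (c - t0))%R. apply Rinv_0_lt_compat; lra. lra. }
specialize (Hm (t0 + h)%R ltac:(replace (t0 + h - t0)%R with h by ring; rewrite Rabs_right; lra)).
assert (0 < f1 c * (t0 + h - t0))%R by (apply Rmult_lt_0_compat; lra).
lra.
Qed.

Definition ip (z w : C) : R := (Re z * Re w + Im z * Im w)%R.
Definition nsq (z : C) : R := ip z z.

Lemma nsq_Cmod z : nsq z = (Cmod z * Cmod z)%R.
Proof. unfold nsq, ip, Cmod. destruct z as [a b]; simpl. rewrite sqrt_sqrt. ring. nra. Qed.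

Lemma ip_deriv G G1 t L L1 : rd G t L -> rd G1 t L1 ->
  derivable_pt_lim (fun s => ip (G s) (G1 s)) t (ip L (G1 t) + ip (G t) L1)%R.
Proof.
intros H H1. unfold ip.
apply rd_Re in H as HR. apply rd_Im in H as HI. apply rd_Re in H1 as HR1. apply rd_Im in H1 as HI1.
replace (Re L * Re (G1 t) + Im L * Im (G1 t) + (Re (G t) * Re L1 + Im (G t) * Im L1))%R with
  ((Re L * Re (G1 t) + Re (G t) * Re L1) + (Im L * Im (G1 t) + Im (G t) * Im L1))%R by ring.
apply (derivable_pt_lim_plus (fun s => Re (G s) * Re (G1 s))%R (fun s => Im (G s) * Im (G1 s))%R).
apply (derivable_pt_lim_mult (fun s => Re (G s)) (fun s => Re (G1 s))); auto.
apply (derivable_pt_lim_mult (fun s => Im (G s)) (fun s => Im (G1 s))); auto.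
Qed.

Lemma nsq_deriv G t L : rd G t L -> derivable_pt_lim (fun s => nsq (G s)) t (2 * ip (G t) L)%R.
Proof.
intros H. unfold nsq. replace (2 * ip (G t) L)%R with (ip L (G t) + ip (G t) L)%R by (unfold ip; ring).
apply ip_deriv; auto.
Qed.

Lemma rd_scal2 G t L : rd G t L -> derivable_pt_lim (fun s => 2 * ip (G s) (G s))%R t (2 * (ip L (G t) + ip (G t) L))%R.
Proof.
intros H. apply derivable_pt_lim_scal. apply ip_deriv; auto.
Qed.

Lemma curve_max (c c1 : R -> C) c2 (F F1 : C -> C) F2 t0 delta : (0 < delta)%R ->
  (forall s, (Rabs (s - t0) < delta)%R -> rd c s (c1 s)) ->
  rd c1 t0 c2 ->
  (forall s, (Rabs (s - t0) < delta)%R -> cderiv F (c s) (F1 (c s))) ->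
  cderiv F1 (c t0) F2 ->
  (forall s, (Rabs (s - t0) < delta)%R -> (nsq (F (c s)) <= nsq (F (c t0)))%R) ->
  ip (F (c t0)) (F1 (c t0) * c1 t0) = 0%R /\
  (ip (F (c t0)) (F2 * c1 t0 * c1 t0 + F1 (c t0) * c2) + nsq (F1 (c t0) * c1 t0) <= 0)%R.
Proof.
intros Hd Hc Hc1 HF HF1 Hm.
assert (HG : forall s, (Rabs (s - t0) < delta)%R -> rd (fun s => F (c s)) s (F1 (c s) * c1 s)).
{ intros s Hs. apply rd_chain; auto. }
assert (H0 : (Rabs (t0 - t0) < delta)%R) by (rewrite Rminus_diag, Rabs_R0; lra).
assert (HG1 : rd (fun s => F1 (c s) * c1 s) t0 (F2 * c1 t0 * c1 t0 + F1 (c t0) * c2)).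
{ apply rd_mult. apply rd_chain; auto. auto. }
set (phi1 := fun s => (2 * ip (F (c s)) (F1 (c s) * c1 s))%R).
assert (D1 : forall s, (Rabs (s - t0) < delta)%R -> derivable_pt_lim (fun s => nsq (F (c s))) s (phi1 s)).
{ intros s Hs. unfold phi1. apply (nsq_deriv (fun s => F (c s))). auto. }
assert (D2 : derivable_pt_lim phi1 t0 (2 * (ip (F1 (c t0) * c1 t0) (F1 (c t0) * c1 t0) + ip (F (c t0)) (F2 * c1 t0 * c1 t0 + F1 (c t0) * c2)))%R).
{ unfold phi1. apply derivable_pt_lim_scal. apply (ip_deriv (fun s => F (c s)) (fun s => F1 (c s) * c1 s)); auto. }
split.
- assert (phi1 t0 = 0%R) by (apply (max_deriv0 _ phi1 t0 delta Hd (D1 t0 H0) Hm)).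
  unfold phi1 in H. lra.
- pose proof (max_deriv2 _ phi1 t0 _ delta Hd D1 D2 Hm). unfold nsq in *. lra.
Qed.

Lemma dpl_ext (f g : R -> R) x l : (forall s, f s = g s) -> derivable_pt_lim f x l -> derivable_pt_lim g x l.
Proof. intros E H eps He. destruct (H eps He) as [d Hd]. exists d. intros h Hh Hl. rewrite <- !E. auto. Qed.

Definition Ci : C := (0, 1)%R.
Definition circ (r s : R) : C := (r * cos s, r * sin s)%R.

Lemma rd_circ r s : rd (circ r) s (Ci * circ r s).
Proof.
apply rd_of_comp.
- apply dpl_ext with (fun s => r * cos s)%R. intros; reflexivity.
  replace (Re (Ci * circ r s)) with (r * (- sin s))%R by (unfold Ci, circ; simpl; ring).
  apply derivable_pt_lim_scal. apply derivable_pt_lim_cos.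
- apply dpl_ext with (fun s => r * sin s)%R. intros; reflexivity.
  replace (Im (Ci * circ r s)) with (r * cos s)%R by (unfold Ci, circ; simpl; ring).
  apply derivable_pt_lim_scal. apply derivable_pt_lim_sin.
Qed.

Lemma rd_circ1 r s : rd (fun s => Ci * circ r s) s (- circ r s).
Proof.
apply rd_of_comp.
- apply dpl_ext with (fun s => - (r * sin s))%R. intros; unfold Ci, circ; simpl; ring.
  replace (Re (- circ r s)) with (- (r * cos s))%R by (unfold circ; simpl; ring).
  apply derivable_pt_lim_opp. apply derivable_pt_lim_scal. apply derivable_pt_lim_sin.
- apply dpl_ext with (fun s => r * cos s)%R. intros; unfold Ci, circ; simpl; ring.
  replace (Im (- circ r s)) with (r * (- sin s))%R by (unfold circ; simpl; ring).
  apply derivable_pt_lim_scal. apply derivable_pt_lim_cos.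
Qed.

Definition line (a b : C) (s : R) : C := a + RtoC s * b.

Lemma rd_line a b s : rd (line a b) s b.
Proof.
intros eps He. exists 1%R. split. lra. intros h _.
unfold line. replace (a + RtoC (s + h)%R * b - (a + RtoC s * b) - RtoC h * b) with (RtoC 0).
rewrite Cmod_0. pose proof (Rabs_pos h). nra.
rewrite RtoC_plus. ring.
Qed.

Lemma lip_of_deriv (f f' : R -> R) : (forall x, derivable_pt_lim f x (f' x)) -> (forall x, (Rabs (f' x) <= 1)%R) ->
  forall a b, (Rabs (f a - f b) <= Rabs (a - b))%R.
Proof.
intros Hd Hb a b.
destruct (Rtotal_order a b) as [H|[H|H]].
- destruct (MVT_cor2 f f' a b H) as [c [E _]]. intros; auto.
  rewrite <- Rabs_Ropp, Ropp_minus_distr, E, <- (Rabs_Ropp (a - b)), Ropp_minus_distr, Rabs_mult.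
  pose proof (Hb c). pose proof (Rabs_pos (b - a)). nra.
- subst. rewrite !Rminus_diag, Rabs_R0. lra.
- destruct (MVT_cor2 f f' b a H) as [c [E _]]. intros; auto.
  rewrite E, Rabs_mult. pose proof (Hb c). pose proof (Rabs_pos (a - b)). nra.
Qed.

Lemma cos_lip a b : (Rabs (cos a - cos b) <= Rabs (a - b))%R.
Proof.
apply (lip_of_deriv cos (fun x => - sin x)%R). apply derivable_pt_lim_cos.
intros x. rewrite Rabs_Ropp. pose proof (SIN_bound x). apply Rabs_le. lra.
Qed.

Lemma sin_lip a b : (Rabs (sin a - sin b) <= Rabs (a - b))%R.
Proof.
apply (lip_of_deriv sin cos). apply derivable_pt_lim_sin.
intros x. pose proof (COS_bound x). apply Rabs_le. lra.
Qed.

Lemma Cmod_circ r t : (0 <= r)%R -> Cmod (circ r t) = r.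
Proof.
intros Hr. unfold circ, Cmod; simpl.
replace (r * cos t * (r * cos t * 1) + r * sin t * (r * sin t * 1))%R with (r * r * (Rsqr (sin t) + Rsqr (cos t)))%R by (unfold Rsqr; ring).
rewrite sin2_cos2, Rmult_1_r. apply sqrt_square. auto.
Qed.

Lemma circ_diff r r' t t' : (Cmod (circ r t - circ r' t') <= 2 * Rabs (r - r') + 2 * Rabs r' * Rabs (t - t'))%R.
Proof.
eapply Rle_trans. apply Cmod_le_sum. unfold circ; simpl.
replace (r * cos t + - (r' * cos t'))%R with ((r - r') * cos t + r' * (cos t - cos t'))%R by ring.
replace (r * sin t + - (r' * sin t'))%R with ((r - r') * sin t + r' * (sin t - sin t'))%R by ring.
pose proof (Rabs_triang ((r - r') * cos t) (r' * (cos t - cos t'))).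
pose proof (Rabs_triang ((r - r') * sin t) (r' * (sin t - sin t'))).
rewrite !Rabs_mult in *.
pose proof (cos_lip t t'). pose proof (sin_lip t t').
assert (Rabs (cos t) <= 1)%R by (pose proof (COS_bound t); apply Rabs_le; lra).
assert (Rabs (sin t) <= 1)%R by (pose proof (SIN_bound t); apply Rabs_le; lra).
pose proof (Rabs_pos (r - r')). pose proof (Rabs_pos r'). pose proof (Rabs_pos (cos t)). pose proof (Rabs_pos (sin t)).
pose proof (Rabs_pos (cos t - cos t')). pose proof (Rabs_pos (sin t - sin t')).
nra.
Qed.

Lemma polar (z : C) : exists t, (0 <= t <= 2 * PI)%R /\ z = circ (Cmod z) t.
Proof.
destruct (Ceq_dec z 0) as [->|Hz].
- exists 0%R. split. pose proof PI_RGT_0; lra. rewrite Cmod_0. unfold circ. rewrite !Rmult_0_l. reflexivity.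
- pose proof (Cmod_pos z Hz) as Hm.
  destruct z as [a b]. set (m := Cmod (a, b)) in *.
  assert (Hs : (m * m = a * a + b * b)%R) by (unfold m, Cmod; simpl; rewrite sqrt_sqrt; [ring|nra]).
  assert (Ha : (-1 <= a / m <= 1)%R).
  { split; [apply Rmult_le_reg_r with m; auto; unfold Rdiv; rewrite Rmult_assoc, Rinv_l by lra; nra
           |apply Rmult_le_reg_r with m; auto; unfold Rdiv; rewrite Rmult_assoc, Rinv_l by lra; nra]. }
  assert (Hsq : sqrt (1 - (a / m)²) = (Rabs b / m)%R).
  { apply sqrt_lem_1. unfold Rsqr. nra. apply Rmult_le_pos. apply Rabs_pos. left; apply Rinv_0_lt_compat; lra.
    unfold Rsqr. replace (Rabs b / m * (Rabs b / m))%R with ((Rabs b * Rabs b) / (m * m))%R by (field; lra).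
    replace (Rabs b * Rabs b)%R with (m * m - a * a)%R by (rewrite <- Rabs_mult, Rabs_right; nra).
    field. lra. }
  pose proof (acos_bound (a / m)).
  destruct (Rle_dec 0 b) as [Hb|Hb].
  + exists (acos (a / m)). split. lra.
    unfold circ. rewrite cos_acos, sin_acos, Hsq by auto. rewrite Rabs_right by lra.
    f_equal; field; lra.
  + exists (2 * PI - acos (a / m))%R. split. lra.
    unfold circ. rewrite cos_minus, sin_minus, cos_2PI, sin_2PI, cos_acos, sin_acos, Hsq by auto.
    rewrite Rabs_left by lra. f_equal; field; lra.
Qed.

Lemma cont_pt_of_eps (f : R -> R) x :
  (forall eps, (0 < eps)%R -> exists delta, (0 < delta)%R /\ forall y, (Rabs (y - x) < delta -> Rabs (f y - f x) < eps)%R) ->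
  continuity_pt f x.
Proof.
intros H eps He. destruct (H eps He) as [d [Hd Hy]]. exists d. split. lra.
intros y [_ Hyd]. simpl in *. unfold R_dist in *. apply Hy. auto.
Qed.

Definition clampr (r0 r : R) : R := Rmax 0 (Rmin r r0).

Lemma clampr_bound r0 r : (0 <= r0)%R -> (0 <= clampr r0 r <= r0)%R.
Proof. intros H. unfold clampr. split. apply Rmax_l. apply Rmax_lub; auto. apply Rmin_r. Qed.

Lemma clampr_lip r0 r r' : (0 <= r0)%R -> (Rabs (clampr r0 r - clampr r0 r') <= Rabs (r - r'))%R.
Proof.
intros H. unfold clampr, Rmax, Rmin.
repeat (destruct (Rle_dec _ _)); apply Rabs_le; split_Rabs; try lra.
all: unfold Rabs; repeat destruct Rcase_abs; lra.
Qed.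

Lemma clampr_id r0 r : (0 <= r <= r0)%R -> clampr r0 r = r.
Proof. intros H. unfold clampr. rewrite Rmin_left by lra. rewrite Rmax_right by lra. reflexivity. Qed.

Lemma disk_max (V : C -> R) r0 : (0 <= r0)%R ->
  (forall z, (Cmod z <= r0)%R -> forall eps, (0 < eps)%R -> exists delta, (0 < delta)%R /\
     forall y, (Cmod y <= r0)%R -> (Cmod (y - z) < delta)%R -> (Rabs (V y - V z) < eps)%R) ->
  exists zs, (Cmod zs <= r0)%R /\ forall z, (Cmod z <= r0)%R -> (V z <= V zs)%R.
Proof.
intros Hr0 HV.
set (W := fun r t => V (circ (clampr r0 r) t)).
assert (Hcm : forall r t, (Cmod (circ (clampr r0 r) t) <= r0)%R).
{ intros r t. rewrite Cmod_circ by (apply clampr_bound; auto). apply clampr_bound; auto. }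
assert (HW : forall r t eps, (0 < eps)%R -> exists delta, (0 < delta)%R /\ forall r' t',
   (Rabs (r' - r) < delta)%R -> (Rabs (t' - t) < delta)%R -> (Rabs (W r' t' - W r t) < eps)%R).
{ intros r t eps He. destruct (HV _ (Hcm r t) eps He) as [d [Hd Hy]].
  exists (d / (2 + 2 * r0 + 1))%R. split. apply Rdiv_lt_0_compat; lra.
  intros r' t' H1 H2. apply Hy. apply Hcm.
  eapply Rle_lt_trans. apply circ_diff.
  pose proof (clampr_lip r0 r' r Hr0). pose proof (clampr_bound r0 r Hr0).
  rewrite (Rabs_right (clampr r0 r)) by lra.
  pose proof (Rabs_pos (t' - t)). pose proof (Rabs_pos (r' - r)).
  assert (E : (d = (2 + 2 * r0 + 1) * (d / (2 + 2 * r0 + 1)))%R) by (field; lra).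
  set (q := (d / (2 + 2 * r0 + 1))%R) in *. nra. }
assert (Hmax : forall r, exists t, (0 <= t <= 2 * PI)%R /\ forall s, (0 <= s <= 2 * PI)%R -> (W r s <= W r t)%R).
{ intros r. destruct (continuity_ab_maj (W r) 0 (2 * PI)) as [t [Ht1 Ht2]].
  pose proof PI_RGT_0; lra.
  intros c _. apply cont_pt_of_eps. intros eps He. destruct (HW r c eps He) as [d [Hd Hy]].
  exists d. split; auto. intros y Hyc. apply Hy; auto. rewrite Rminus_diag, Rabs_R0. lra.
  exists t. split; auto. }
set (tm := fun r => proj1_sig (constructive_indefinite_description _ (Hmax r))).
assert (Htm : forall r, (0 <= tm r <= 2 * PI)%R /\ forall s, (0 <= s <= 2 * PI)%R -> (W r s <= W r (tm r))%R).
{ intros r. unfold tm. destruct (constructive_indefinite_description _ (Hmax r)). simpl. auto. }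
set (m := fun r => W r (tm r)).
assert (Hmc : forall r, continuity_pt m r).
{ intros r. apply cont_pt_of_eps. intros eps He.
  assert (Hg : forall t, exists d : posreal, forall r' t',
     (Rabs (r' - r) < d)%R -> (Rabs (t' - t) < d)%R -> (Rabs (W r' t' - W r t) < eps / 3)%R).
  { intros t. destruct (HW r t (eps/3)%R ltac:(lra)) as [d [Hd Hy]]. exists (mkposreal d Hd). auto. }
  set (dl := fun t => proj1_sig (constructive_indefinite_description _ (Hg t))).
  assert (Hdl : forall t r' t', (Rabs (r' - r) < dl t)%R -> (Rabs (t' - t) < dl t)%R -> (Rabs (W r' t' - W r t) < eps / 3)%R).
  { intros t. unfold dl. destruct (constructive_indefinite_description _ (Hg t)). simpl. auto. }
  set (dl2 := fun t => mkposreal (dl t / 2) ltac:(pose proof (cond_pos (dl t)); lra)).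
  destruct (compactness_value_1d 0 (2 * PI) dl2) as [d Hd].
  exists d. split. apply cond_pos. intros r' Hr'.
  assert (U : forall t, (0 <= t <= 2 * PI)%R -> (Rabs (W r' t - W r t) < 2 * eps / 3)%R).
  { intros t Ht. specialize (Hd t Ht). apply Classical_Prop.NNPP. intro Hn. apply Hd. intros [u [Hu1 [Hu2 Hu3]]].
    apply Hn. simpl in Hu2, Hu3. pose proof (cond_pos (dl u)).
    assert (A1 : (Rabs (W r' t - W r u) < eps / 3)%R) by (apply Hdl; lra).
    assert (A2 : (Rabs (W r t - W r u) < eps / 3)%R) by (apply Hdl; [rewrite Rminus_diag, Rabs_R0|]; lra).
    replace (W r' t - W r t)%R with ((W r' t - W r u) - (W r t - W r u))%R by ring.
    eapply Rle_lt_trans. apply Rabs_triang. rewrite Rabs_Ropp. lra. }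
  destruct (Htm r) as [T1 T2]. destruct (Htm r') as [T3 T4].
  pose proof (U _ T1). pose proof (U _ T3). pose proof (T2 _ T3). pose proof (T4 _ T1).
  unfold m. apply Rabs_def1; apply Rabs_def2 in H; apply Rabs_def2 in H0; lra. }
destruct (continuity_ab_maj m 0 r0 Hr0 (fun c _ => Hmc c)) as [rs [Hrs1 Hrs2]].
exists (circ (clampr r0 rs) (tm rs)). split. apply Hcm.
intros z Hz. destruct (polar z) as [t [Ht Ez]].
assert (V z = W (Cmod z) t) by (unfold W; rewrite clampr_id by (split; [apply Cmod_ge_0|auto]); rewrite <- Ez; reflexivity).
rewrite H. apply Rle_trans with (m (Cmod z)). apply (proj2 (Htm _)); auto.
change (m (Cmod z) <= m rs)%R. apply Hrs1. split; auto. apply Cmod_ge_0.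
Qed.

Lemma Cmod_ge_Re_abs (w : C) : (Rabs (Re w) <= Cmod w)%R.
Proof. apply Re_le_Cmod. Qed.

Lemma Csqrt_sq w : Csqrt w * Csqrt w = w.
Proof.
destruct w as [a b]. unfold Csqrt. simpl.
set (M := Cmod (a, b)).
assert (HM : (Rabs a <= M)%R) by apply (Cmod_ge_Re_abs (a,b)).
assert (HM2 : (M * M = a * a + b * b)%R) by (unfold M, Cmod; simpl; rewrite sqrt_sqrt; [ring|nra]).
assert (Ha1 : (0 <= (M + a) / 2)%R) by (pose proof (Rle_abs (-a)); rewrite Rabs_Ropp in *; lra).
assert (Ha2 : (0 <= (M - a) / 2)%R) by (pose proof (Rle_abs a); lra).
assert (Hp : (sqrt ((M + a) / 2) * sqrt ((M - a) / 2) = Rabs b / 2)%R).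
{ rewrite <- sqrt_mult by auto. apply sqrt_lem_1. nra. pose proof (Rabs_pos b); lra.
  replace (Rabs b / 2 * (Rabs b / 2))%R with ((Rabs b * Rabs b) / 4)%R by field.
  rewrite <- Rabs_mult, Rabs_right by nra. nra. }
unfold Cmult; simpl. f_equal.
- destruct (Rle_dec 0 b).
  + rewrite Rmult_1_l. rewrite !sqrt_sqrt by auto. lra.
  + replace (sqrt ((M + a) / 2) * sqrt ((M + a) / 2) - -1 * sqrt ((M - a) / 2) * (-1 * sqrt ((M - a) / 2)))%R
      with (sqrt ((M + a) / 2) * sqrt ((M + a) / 2) - sqrt ((M - a) / 2) * sqrt ((M - a) / 2))%R by ring.
    rewrite !sqrt_sqrt by auto. lra.
- destruct (Rle_dec 0 b).
  + replace (sqrt ((M + a) / 2) * (1 * sqrt ((M - a) / 2)) + 1 * sqrt ((M - a) / 2) * sqrt ((M + a) / 2))%R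
      with (2 * (sqrt ((M + a) / 2) * sqrt ((M - a) / 2)))%R by ring.
    rewrite Hp, Rabs_right by lra. field.
  + replace (sqrt ((M + a) / 2) * (-1 * sqrt ((M - a) / 2)) + -1 * sqrt ((M - a) / 2) * sqrt ((M + a) / 2))%R
      with (- (2 * (sqrt ((M + a) / 2) * sqrt ((M - a) / 2))))%R by ring.
    rewrite Hp, Rabs_left by lra. field.
Qed.

Lemma Re_Csqrt w : Re (Csqrt w) = sqrt ((Cmod w + Re w) / 2).
Proof. reflexivity. Qed.

Lemma h_bound (z : C) : (Cmod z < 1)%R -> (Cmod (z + Csqrt (1 + z * z) - 1) < sqrt 2)%R.
Proof.
intros Hz.
set (Sq := Csqrt (1 + z * z)). set (H := z + Sq).
assert (HS : Sq * Sq = 1 + z * z) by apply Csqrt_sq.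
assert (HH : H * H - 1 = 2 * H * z) by (unfold H; rewrite <- (Cplus_0_r (2 * (z + Sq) * z)); replace (RtoC 0) with (Sq * Sq - 1 - z * z) by (rewrite HS; ring); ring).
destruct z as [a b].
assert (Hab : (a * a + b * b < 1)%R).
{ assert (Cmod (a,b) * Cmod (a,b) < 1)%R by (pose proof (Cmod_ge_0 (a,b)); nra).
  rewrite <- nsq_Cmod in H0. unfold nsq, ip in H0. simpl in H0. lra. }
assert (HReH : (0 < Re H)%R).
{ assert (E1 : Re H = (a + Re Sq)%R) by (unfold H; destruct Sq; reflexivity). rewrite E1.
  unfold Sq. rewrite Re_Csqrt.
  set (w := 1 + (a, b) * (a, b)).
  assert (Hw : Re w = (1 + a * a - b * b)%R) by (unfold w; simpl; ring).
  pose proof (Cmod_ge_0 w).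
  destruct (Rle_dec a 0).
  - assert (sqrt (a * a) < sqrt ((Cmod w + Re w) / 2))%R.
    { apply sqrt_lt_1_alt. split. nra. rewrite Hw. nra. }
    rewrite <- Rsqr_def in H1. rewrite sqrt_Rsqr_abs, Rabs_left1 in H1 by lra. lra.
  - pose proof (sqrt_pos ((Cmod w + Re w) / 2)). lra. }
assert (Hmod : (Cmod (H * H - 1) < 2 * Cmod H)%R).
{ rewrite HH, !Cmod_mult. rewrite Cmod_R, Rabs_right by lra.
  assert (0 < Cmod H)%R by (apply Cmod_pos; intro E; rewrite E in HReH; simpl in HReH; lra).
  assert (Cmod (a,b) < 1)%R by auto. nra. }
assert (Hsq : (nsq (H * H - 1) < 4 * nsq H)%R).
{ rewrite !nsq_Cmod. pose proof (Cmod_ge_0 (H * H - 1)). nra. }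
change (Cmod (H - 1) < sqrt 2)%R.
clearbody H. destruct H as [x y]. simpl in HReH.
unfold nsq, ip in Hsq. simpl in Hsq.
assert (Hk : ((x - 1) * (x - 1) + y * y < 2)%R).
{ set (R2 := (x * x + y * y)%R).
  assert ((R2 - 1) * (R2 - 1) < (2 * x) * (2 * x))%R by (unfold R2; nra).
  assert (R2 - 1 < 2 * x)%R.
  { destruct (Rle_dec (R2 - 1 + 2 * x) 0). lra. nra. }
  unfold R2 in *. nra. }
unfold Cmod. simpl. apply sqrt_lt_1_alt.
replace ((x + - (1)) * ((x + - (1)) * 1) + (y + - 0) * ((y + - 0) * 1))%R with ((x - 1) * (x - 1) + y * y)%R by ring.
pose proof (Rle_0_sqr (x-1)); pose proof (Rle_0_sqr y); unfold Rsqr in *. split; lra.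
Qed.

Lemma rd_subc g t l (q : C) : rd g t l -> rd (fun s => g s - q) t l.
Proof.
intros H eps He. destruct (H eps He) as [d [Hd Hh]]. exists d; split; auto. intros h Hl.
replace (g (t + h)%R - q - (g t - q) - h * l) with (g (t + h)%R - g t - h * l) by ring. auto.
Qed.

Lemma curve_max1 (c : R -> C) c1 (F : C -> C) F1 t0 (q : C) (eps delta : R) : (0 < delta)%R ->
  rd c t0 c1 -> cderiv F (c t0) F1 ->
  (forall s, (Rabs (s - t0) < delta)%R ->
     (nsq (F (c s)) + eps * nsq (c s - q) <= nsq (F (c t0)) + eps * nsq (c t0 - q))%R) ->
  (ip (F (c t0)) (F1 * c1) + eps * ip (c t0 - q) c1 = 0)%R.
Proof.
intros Hd Hc HF Hm.
assert (D : derivable_pt_lim (fun s => nsq (F (c s)) + eps * nsq (c s - q))%R t0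
   (2 * ip (F (c t0)) (F1 * c1) + eps * (2 * ip (c t0 - q) c1))%R).
{ apply derivable_pt_lim_plus. apply (nsq_deriv (fun s => F (c s))). apply rd_chain; auto.
  apply derivable_pt_lim_scal. apply (nsq_deriv (fun s => c s - q)). apply rd_subc; auto. }
set (f1 := fun _ : R => (2 * ip (F (c t0)) (F1 * c1) + eps * (2 * ip (c t0 - q) c1))%R).
assert (f1 t0 = 0%R) by (apply (max_deriv0 _ f1 t0 delta Hd D Hm)).
unfold f1 in H. lra.
Qed.

Lemma curve_max2 (c c1 : R -> C) c2 (F F1 : C -> C) F2 t0 (q : C) (eps delta : R) : (0 < delta)%R ->
  (forall s, (Rabs (s - t0) < delta)%R -> rd c s (c1 s)) ->
  rd c1 t0 c2 ->
  (forall s, (Rabs (s - t0) < delta)%R -> cderiv F (c s) (F1 (c s))) ->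
  cderiv F1 (c t0) F2 ->
  (forall s, (Rabs (s - t0) < delta)%R ->
     (nsq (F (c s)) + eps * nsq (c s - q) <= nsq (F (c t0)) + eps * nsq (c t0 - q))%R) ->
  (ip (F (c t0)) (F1 (c t0) * c1 t0) + eps * ip (c t0 - q) (c1 t0) = 0)%R /\
  ((ip (F (c t0)) (F2 * c1 t0 * c1 t0 + F1 (c t0) * c2) + nsq (F1 (c t0) * c1 t0))
    + eps * (ip (c t0 - q) c2 + nsq (c1 t0)) <= 0)%R.
Proof.
intros Hd Hc Hc1 HF HF1 Hm.
assert (H0 : (Rabs (t0 - t0) < delta)%R) by (rewrite Rminus_diag, Rabs_R0; lra).
assert (HG1 : rd (fun s => F1 (c s) * c1 s) t0 (F2 * c1 t0 * c1 t0 + F1 (c t0) * c2)).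
{ apply rd_mult. apply rd_chain; auto. auto. }
set (phi1 := fun s => (2 * ip (F (c s)) (F1 (c s) * c1 s) + eps * (2 * ip (c s - q) (c1 s)))%R).
assert (D1 : forall s, (Rabs (s - t0) < delta)%R ->
   derivable_pt_lim (fun s => nsq (F (c s)) + eps * nsq (c s - q))%R s (phi1 s)).
{ intros s Hs. unfold phi1. apply derivable_pt_lim_plus. apply (nsq_deriv (fun s => F (c s))). apply rd_chain; auto.
  apply derivable_pt_lim_scal. apply (nsq_deriv (fun s => c s - q)). apply rd_subc; auto. }
assert (D2 : derivable_pt_lim phi1 t0
  (2 * (ip (F1 (c t0) * c1 t0) (F1 (c t0) * c1 t0) + ip (F (c t0)) (F2 * c1 t0 * c1 t0 + F1 (c t0) * c2))
   + eps * (2 * (ip (c1 t0) (c1 t0) + ip (c t0 - q) c2)))%R).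
{ unfold phi1. apply derivable_pt_lim_plus.
  apply derivable_pt_lim_scal. apply (ip_deriv (fun s => F (c s)) (fun s => F1 (c s) * c1 s)); auto. apply rd_chain; auto.
  apply derivable_pt_lim_scal. apply derivable_pt_lim_scal. apply (ip_deriv (fun s => c s - q) c1); auto. apply rd_subc; auto. }
split.
- assert (phi1 t0 = 0%R) by (apply (max_deriv0 _ phi1 t0 delta Hd (D1 t0 H0) Hm)).
  unfold phi1 in H. lra.
- pose proof (max_deriv2 _ phi1 t0 _ delta Hd D1 D2 Hm). unfold nsq in *. lra.
Qed.

Lemma cd_minus f g x a b : cderiv f x a -> cderiv g x b -> cderiv (fun z => f z - g z) x (a - b).
Proof.
intros Ha Hb. apply cd_ext with (fun z => f z + (-1) * g z). intros; ring.
apply cd_eq with (a + (0 * g x + (-1) * b)). ring.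
apply cd_plus; auto. apply cd_mult; auto. apply cd_const.
Qed.

Lemma cd_scal (k : C) f x a : cderiv f x a -> cderiv (fun z => k * f z) x (k * a).
Proof.
intros Ha. apply cd_eq with (0 * f x + k * a). ring. apply cd_mult; auto. apply cd_const.
Qed.

Lemma Cminus_0_r (z : C) : z - 0 = z.
Proof. ring. Qed.

Lemma cd_scal_id (k : C) x : cderiv (fun y => k * y) x k.
Proof. apply cd_eq with (0 * x + k * 1). ring. apply cd_mult. apply cd_const. apply cd_id. Qed.

Lemma taylor0 (w w1 : C -> C) (a : C) rho : (0 < rho)%R ->
  (forall y, (Cmod y < rho)%R -> cderiv w y (w1 y)) -> cderiv w1 0 a -> w 0 = 0 ->
  cderiv (fun z => if Ceq_dec z 0 then w1 0 else w z / z) 0 (a / 2).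
Proof.
intros Hr Hw Hw1 Hw0. apply cd_iff. intros eps.
pose proof (proj1 (cd_iff w1 0 a) Hw1) as H1.
destruct (H1 (mkposreal (eps / 4) ltac:(pose proof (cond_pos eps); lra))) as [d1 Hd1]. simpl in Hd1.
assert (Hp : (0 < Rmin d1 rho)%R) by (apply Rmin_pos; [apply cond_pos|lra]).
exists (mkposreal _ Hp). simpl. intros z Hz.
assert (Hz1 : (Cmod (z - 0) < d1)%R) by (eapply Rlt_le_trans; [exact Hz|apply Rmin_l]).
assert (Hz2 : (Cmod (z - 0) < rho)%R) by (eapply Rlt_le_trans; [exact Hz|apply Rmin_r]).
rewrite Cminus_0_r in *.
destruct (Ceq_dec 0 0) as [_|C0]; [|exfalso; apply C0; reflexivity].
destruct (Ceq_dec z 0) as [->|Hz0].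
{ replace (w1 0 - w1 0 - 0 * (a / 2)) with (RtoC 0) by ring. rewrite !Cmod_0. lra. }
set (e := fun y => w y - w1 0 * y - a / 2 * (y * y)).
assert (He : forall y, (Cmod y < rho)%R -> cderiv e y (w1 y - w1 0 - a * y)).
{ intros y Hy. unfold e. apply cd_eq with (w1 y - w1 0 - (a / 2 * (1 * y + y * 1))).
  field. apply cd_minus. apply cd_minus. apply Hw; auto. apply cd_scal_id.
  apply cd_scal. apply cd_mult; apply cd_id. }
assert (Hbd : forall s, (0 <= s <= 1)%R -> Rle (Cmod ((w1 (s * z) - w1 0 - a * (s * z)) * z)) (eps / 4 * (Cmod z * Cmod z))%R).
{ intros s Hs. rewrite Cmod_mult.
  assert (Cmod (s * z) <= Cmod z)%R by (rewrite Cmod_mult, Cmod_R, Rabs_right by lra; pose proof (Cmod_ge_0 z); nra).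
  assert (Cmod (s * z - 0) < d1)%R by (rewrite Cminus_0_r; lra).
  specialize (Hd1 _ H0). rewrite Cminus_0_r in Hd1.
  replace (w1 (RtoC s * z) - w1 0 - a * (RtoC s * z)) with (w1 (RtoC s * z) - w1 0 - s * z * a) by ring.
  pose proof (Cmod_ge_0 z). pose proof (cond_pos eps).
  apply Rle_trans with (eps / 4 * Cmod (RtoC s * z) * Cmod z)%R. apply Rmult_le_compat_r; auto.
  rewrite Rmult_assoc. apply Rmult_le_compat_l. lra. apply Rmult_le_compat_r; auto. }
assert (Hrd : forall s, (0 <= s <= 1)%R -> rd (fun s => e (line 0 z s)) s ((w1 (RtoC s * z) - w1 0 - a * (RtoC s * z)) * z)).
{ intros s Hs. apply rd_chain. unfold line. rewrite Cplus_0_l. apply He.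
  rewrite Cmod_mult, Cmod_R, Rabs_right by lra. pose proof (Cmod_ge_0 z). nra. apply rd_line. }
assert (E1 : e (line 0 z 1) = e z) by (unfold line; f_equal; ring).
assert (E0 : e (line 0 z 0) = 0) by (unfold line; unfold e; rewrite Cmult_0_l, Cplus_0_l, Hw0; ring).
assert (HRe : (Rabs (Re (e z)) <= eps / 4 * (Cmod z * Cmod z))%R).
{ destruct (MVT_cor2 (fun s => Re (e (line 0 z s))) (fun s => Re ((w1 (s * z) - w1 0 - a * (s * z)) * z)) 0 1 Rlt_0_1) as [c [Ec Hc]].
  intros c Hc. apply rd_Re. apply Hrd; auto.
  rewrite E1, E0 in Ec. change (Re (RtoC 0)) with 0%R in Ec. rewrite !Rminus_0_r, Rmult_1_r in Ec.
  rewrite Ec.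
  eapply Rle_trans. apply Re_le_Cmod. apply Hbd. lra. }
assert (HIm : (Rabs (Im (e z)) <= eps / 4 * (Cmod z * Cmod z))%R).
{ destruct (MVT_cor2 (fun s => Im (e (line 0 z s))) (fun s => Im ((w1 (s * z) - w1 0 - a * (s * z)) * z)) 0 1 Rlt_0_1) as [c [Ec Hc]].
  intros c Hc. apply rd_Im. apply Hrd; auto.
  rewrite E1, E0 in Ec. change (Im (RtoC 0)) with 0%R in Ec. rewrite !Rminus_0_r, Rmult_1_r in Ec.
  rewrite Ec.
  eapply Rle_trans. apply Im_le_Cmod. apply Hbd. lra. }
assert (Hez : (Cmod (e z) <= eps / 2 * (Cmod z * Cmod z))%R) by (eapply Rle_trans; [apply Cmod_le_sum|lra]).
replace (w z / z - w1 0 - z * (a / 2)) with (e z / z) by (unfold e; field; auto).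
unfold Cdiv. rewrite Cmod_mult, Cmod_inv by auto.
pose proof (Cmod_pos z Hz0).
apply Rmult_le_reg_r with (Cmod z). auto.
rewrite Rmult_assoc, Rinv_l by lra. rewrite Rmult_1_r.
pose proof (cond_pos eps). nra.
Qed.

Lemma cd_loc f g x l : (exists delta, (0 < delta)%R /\ forall y, (Cmod (y - x) < delta)%R -> f y = g y) ->
  cderiv f x l -> cderiv g x l.
Proof.
intros [d [Hd E]] H. pose proof (proj1 (cd_iff f x l) H) as H'. apply cd_iff. intros eps.
destruct (H' eps) as [d1 Hd1].
assert (Hp : (0 < Rmin d d1)%R) by (apply Rmin_pos; [lra|apply cond_pos]).
assert (Ex : f x = g x) by (apply E; replace (x - x) with (RtoC 0) by ring; rewrite Cmod_0; lra).
exists (mkposreal _ Hp). simpl. intros y Hy.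
rewrite <- Ex, <- E. apply Hd1. eapply Rlt_le_trans; [exact Hy|apply Rmin_r].
eapply Rlt_le_trans; [exact Hy|apply Rmin_l].
Qed.

Lemma nsq_cont (b : C) : forall eps, (0 < eps)%R -> exists eta, (0 < eta)%R /\
  forall a, (Cmod (a - b) < eta -> Rabs (nsq a - nsq b) < eps)%R.
Proof.
intros eps He.
set (K := (2 * Cmod b + 1)%R). assert (HK : (0 < K)%R) by (unfold K; pose proof (Cmod_ge_0 b); lra).
exists (Rmin 1 (eps / K)). split. apply Rmin_pos; [lra|apply Rdiv_lt_0_compat; lra].
intros a Ha.
assert (H1 : (Cmod (a - b) < 1)%R) by (eapply Rlt_le_trans; [exact Ha|apply Rmin_l]).
assert (H2 : (Cmod (a - b) < eps / K)%R) by (eapply Rlt_le_trans; [exact Ha|apply Rmin_r]).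
rewrite !nsq_Cmod.
pose proof (Cmod_diff_le a b).
pose proof (Cmod_ge_0 a). pose proof (Cmod_ge_0 b). pose proof (Cmod_ge_0 (a - b)).
replace (Cmod a * Cmod a - Cmod b * Cmod b)%R with ((Cmod a - Cmod b) * (Cmod a + Cmod b))%R by ring.
rewrite Rabs_mult, (Rabs_right (Cmod a + Cmod b)) by lra.
assert (Cmod a <= Cmod b + Cmod (a - b))%R by (apply Rabs_le_between' in H; lra).
assert (Cmod a + Cmod b <= K)%R by (unfold K; lra).
apply Rle_lt_trans with (Cmod (a - b) * K)%R.
apply Rmult_le_compat; try lra. apply Rabs_pos.
apply Rmult_lt_reg_r with (/ K)%R. apply Rinv_0_lt_compat; lra.
replace (Cmod (a - b) * K * / K)%R with (Cmod (a - b)) by (field; lra). exact H2.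
Qed.

Definition gq (w w1 : C -> C) (z : C) : C := if Ceq_dec z 0 then w1 0 else w z / z.

Lemma Cmod_line (a b : C) s : Cmod (line a b s - a) = (Rabs s * Cmod b)%R.
Proof. unfold line. replace (a + s * b - a) with (RtoC s * b) by ring. rewrite Cmod_mult, Cmod_R. reflexivity. Qed.

Lemma line_0 (a b : C) : line a b 0 = a.
Proof. unfold line. ring. Qed.

Lemma Cmod_Ci : Cmod Ci = 1%R.
Proof. unfold Cmod, Ci; simpl. replace (0 * (0 * 1) + 1 * (1 * 1))%R with 1%R by ring. apply sqrt_1. Qed.

Lemma cd_ex_cont f x l : cderiv f x l -> forall eps, (0 < eps)%R -> exists delta, (0 < delta)%R /\
  forall y, (Cmod (y - x) < delta -> Cmod (f y - f x) < eps)%R.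
Proof.
intros H eps He. destruct (cd_cont f x l H (mkposreal eps He)) as [d Hd]. exists d. split. apply cond_pos. auto.
Qed.

Lemma schwarz (w w1 w2 : C -> C) r0 : (0 < r0)%R ->
  (forall z, (Cmod z <= r0)%R -> cderiv w z (w1 z)) ->
  (forall z, (Cmod z <= r0)%R -> cderiv w1 z (w2 z)) ->
  w 0 = 0 -> (forall z, (Cmod z <= r0)%R -> (Cmod (w z) <= 1)%R) ->
  forall z, (Cmod z <= r0)%R -> (Cmod (w z) * r0 <= Cmod z)%R.
Proof.
intros Hr Hw Hw1 Hw0 Hb.
set (g := gq w w1).
set (g1 := fun y => w1 y * / y + w y * (- / (y * y))).
assert (Hg : forall y, (Cmod y <= r0)%R -> y <> 0 -> cderiv g y (g1 y)).
{ intros y Hy Hy0. apply cd_loc with (fun y => w y * / y).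
  exists (Cmod y). split. apply Cmod_pos; auto. intros x Hx. unfold g, gq.
  destruct (Ceq_dec x 0) as [->|_]. exfalso. replace (0 - y) with (-y) in Hx by ring. rewrite Cmod_opp in Hx. lra. reflexivity.
  unfold g1. apply cd_mult. apply Hw; auto. apply cd_inv; auto. }
assert (Hg0 : cderiv g 0 (w2 0 / 2)).
{ apply (taylor0 w w1 (w2 0) r0 Hr). intros y Hy; apply Hw; lra. apply Hw1. rewrite Cmod_0; lra. auto. }
assert (Hg1 : forall y, (Cmod y <= r0)%R -> y <> 0 -> exists F2, cderiv g1 y F2).
{ intros y Hy Hy0. eexists. unfold g1. apply cd_plus. apply cd_mult. apply Hw1; auto. apply cd_inv; auto.
  apply cd_mult. apply Hw; auto.
  apply cd_ext with (fun y => (-1) * (/ (y * y))). intros; ring.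
  apply cd_scal. apply (cd_comp (fun u => / u) (fun y => y * y)). apply cd_inv. apply Cmult_neq_0; auto.
  apply cd_mult; apply cd_id. }
assert (Hgd : forall y, (Cmod y <= r0)%R -> exists l, cderiv g y l).
{ intros y Hy. destruct (Ceq_dec y 0) as [->|Hy0]. eexists; exact Hg0. eexists; apply Hg; auto. }
set (q := if Rle_dec (ip (g 0) (w2 0 / 2)) 0 then RtoC 1 else RtoC (-1)).
assert (Hq : Cmod q = 1%R) by (unfold q; destruct (Rle_dec _ _); rewrite Cmod_R; unfold Rabs; destruct Rcase_abs; lra).
assert (Key : forall eps, (0 < eps)%R -> forall z, (Cmod z <= r0)%R ->
   (nsq (g z) <= / (r0 * r0) + eps * ((r0 + 1) * (r0 + 1)))%R).
{ intros eps He.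
  set (V := fun z => (nsq (g z) + eps * nsq (z - q))%R).
  destruct (disk_max V r0 ltac:(lra)) as [zs [Hzs Hmax]].
  { intros z Hz eta Heta.
    destruct (Hgd z Hz) as [l Hl].
    destruct (nsq_cont (g z) (eta / 2) ltac:(lra)) as [e1 [He1 N1]].
    destruct (nsq_cont (z - q) (eta / 2 / (eps + 1)) ltac:(apply Rdiv_lt_0_compat; lra)) as [e2 [He2 N2]].
    destruct (cd_ex_cont g z l Hl e1 He1) as [d1 [Hd1 C1]].
    exists (Rmin d1 e2). split. apply Rmin_pos; auto. intros y Hy Hyz.
    assert (A1 : (Rabs (nsq (g y) - nsq (g z)) < eta / 2)%R) by (apply N1, C1; eapply Rlt_le_trans; [exact Hyz|apply Rmin_l]).
    assert (A2 : (Rabs (nsq (y - q) - nsq (z - q)) < eta / 2 / (eps + 1))%R).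
    { apply N2. replace (y - q - (z - q)) with (y - z) by ring. eapply Rlt_le_trans; [exact Hyz|apply Rmin_r]. }
    unfold V. replace (nsq (g y) + eps * nsq (y - q) - (nsq (g z) + eps * nsq (z - q)))%R with
      ((nsq (g y) - nsq (g z)) + eps * (nsq (y - q) - nsq (z - q)))%R by ring.
    eapply Rle_lt_trans. apply Rabs_triang. rewrite Rabs_mult, (Rabs_right eps) by lra.
    assert (eps * Rabs (nsq (y - q) - nsq (z - q)) <= eta / 2)%R.
    { apply Rle_trans with ((eps + 1) * (eta / 2 / (eps + 1)))%R.
      apply Rmult_le_compat; try lra. apply Rabs_pos. right; field; lra. }
    lra. }
  destruct (Rle_lt_or_eq_dec _ _ Hzs) as [Hlt|Heq].
  - exfalso.
    destruct (Ceq_dec zs 0) as [Hz0|Hz0].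
    +
      pose proof (curve_max1 (line 0 1) 1 g (w2 0 / 2) 0 q eps r0 Hr (rd_line 0 1 0)) as CM.
      rewrite line_0 in CM. specialize (CM Hg0).
      assert (CM2 : (ip (g 0) (w2 0 / 2 * 1) + eps * ip (0 - q) 1)%R = 0%R).
      { apply CM. intros s Hs. subst zs. apply (Hmax (line 0 1 s)).
        replace (line 0 1 s) with (line 0 1 s - 0) by ring. rewrite Cmod_line, Cmod_1. rewrite Rminus_0_r in Hs. lra. }
      revert CM2. unfold q. destruct (Rle_dec (ip (g 0) (w2 0 / 2)) 0) as [Hle|Hgt];
      unfold ip in *; destruct (g 0) as [u1 u2], (w2 0 / 2) as [v1 v2]; simpl in *; intros; nra.
    +
      set (dl := Rmin (r0 - Cmod zs) (Cmod zs)).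
      assert (Hdl : (0 < dl)%R) by (unfold dl; apply Rmin_pos; [lra|apply Cmod_pos; auto]).
      destruct (Hg1 zs Hzs Hz0) as [F2 HF2].
      assert (Hin : forall b s, Cmod b = 1%R -> (Rabs (s - 0) < dl)%R ->
                 (Cmod (line zs b s) <= r0)%R /\ line zs b s <> 0).
      { intros b s Hb1 Hs. rewrite Rminus_0_r in Hs.
        pose proof (Cmod_line zs b s) as Em. rewrite Hb1, Rmult_1_r in Em.
        assert (dl <= r0 - Cmod zs)%R by apply Rmin_l. assert (dl <= Cmod zs)%R by apply Rmin_r.
        pose proof (Cmod_triangle zs (line zs b s - zs)). replace (zs + (line zs b s - zs)) with (line zs b s) in H1 by ring.
        split. lra.
        intro E. rewrite E in Em. replace (0 - zs) with (- zs) in Em by ring. rewrite Cmod_opp in Em. lra. }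
      assert (Run : forall b, Cmod b = 1%R ->
        ((ip (g zs) (F2 * b * b + g1 zs * 0) + nsq (g1 zs * b)) + eps * (ip (zs - q) 0 + nsq b) <= 0)%R).
      { intros b Hb1.
        pose proof (curve_max2 (line zs b) (fun _ => b) 0 g g1 F2 0 q eps dl Hdl) as CM.
        rewrite line_0 in CM.
        destruct CM as [_ CM]; auto.
        intros s _. apply rd_line. apply rd_const.
        intros s Hs. destruct (Hin b s Hb1 Hs). apply Hg; auto.
        intros s Hs. destruct (Hin b s Hb1 Hs). apply (Hmax (line zs b s)); auto. }
      pose proof (Run 1 Cmod_1) as R1. pose proof (Run Ci Cmod_Ci) as R2.
      revert R1 R2. unfold nsq, ip, Ci.
      destruct (g zs) as [u1 u2], F2 as [v1 v2], (g1 zs) as [x1 x2], (zs - q) as [y1 y2]. simpl.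
      intros R1 R2. pose proof (Rle_0_sqr x1). pose proof (Rle_0_sqr x2). unfold Rsqr in *.
      ring_simplify in R1. ring_simplify in R2. lra.
  - intros z Hz. pose proof (Hmax z Hz) as Hm. unfold V in Hm.
    assert (N1 : (0 <= eps * nsq (z - q))%R) by (rewrite nsq_Cmod; apply Rmult_le_pos; [lra| pose proof (Cmod_ge_0 (z - q)); nra]).
    assert (N2 : (nsq (g zs) <= / (r0 * r0))%R).
    { assert (zs <> 0) by (intro E; rewrite E, Cmod_0 in Heq; lra).
      unfold g, gq. destruct (Ceq_dec zs 0) as [E|_]. contradiction.
      rewrite nsq_Cmod. unfold Cdiv. rewrite Cmod_mult, Cmod_inv, Heq by auto.
      pose proof (Hb zs Hzs). pose proof (Cmod_ge_0 (w zs)).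
      assert (0 < / r0)%R by (apply Rinv_0_lt_compat; lra).
      rewrite Rinv_mult.
      assert (Cmod (w zs) * / r0 <= / r0)%R by (rewrite <- (Rmult_1_l (/ r0)) at 2; apply Rmult_le_compat_r; lra).
      assert (0 <= Cmod (w zs) * / r0)%R by (apply Rmult_le_pos; lra).
      apply Rmult_le_compat; lra. }
    assert (N3 : (nsq (zs - q) <= (r0 + 1) * (r0 + 1))%R).
    { rewrite nsq_Cmod. pose proof (Cmod_triangle zs (- q)). rewrite Cmod_opp, Hq, Heq in H.
      pose proof (Cmod_ge_0 (zs - q)). replace (zs + - q) with (zs - q) in H by ring. nra. }
    assert (eps * nsq (zs - q) <= eps * ((r0 + 1) * (r0 + 1)))%R by (apply Rmult_le_compat_l; lra).
    lra. }
intros z Hz.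
destruct (Ceq_dec z 0) as [->|Hz0].
{ rewrite Hw0, Cmod_0. lra. }
assert (Hgz : (nsq (g z) <= / (r0 * r0))%R).
{ apply Rnot_lt_le. intro Hc.
  set (K := ((r0 + 1) * (r0 + 1))%R). assert (HK : (0 < K)%R) by (unfold K; nra).
  set (eps := ((nsq (g z) - / (r0 * r0)) / (2 * K))%R).
  assert (He : (0 < eps)%R) by (unfold eps; apply Rdiv_lt_0_compat; lra).
  pose proof (Key eps He z Hz).
  assert (eps * K = (nsq (g z) - / (r0 * r0)) / 2)%R by (unfold eps; field; lra).
  fold K in H. lra. }
unfold g, gq in Hgz. destruct (Ceq_dec z 0) as [E|_]. contradiction.
rewrite nsq_Cmod in Hgz. unfold Cdiv in Hgz. rewrite Cmod_mult, Cmod_inv in Hgz by auto.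
pose proof (Cmod_pos z Hz0). pose proof (Cmod_ge_0 (w z)).
assert (Hwz : (Cmod (w z) * / Cmod z <= / r0)%R).
{ apply Rnot_lt_le. intro Hc. assert (0 < / r0)%R by (apply Rinv_0_lt_compat; lra).
  rewrite Rinv_mult in Hgz. nra. }
apply Rmult_le_reg_r with (/ Cmod z * / r0)%R. apply Rmult_lt_0_compat; apply Rinv_0_lt_compat; lra.
replace (Cmod (w z) * r0 * (/ Cmod z * / r0))%R with (Cmod (w z) * / Cmod z)%R by (field; lra).
replace (Cmod z * (/ Cmod z * / r0))%R with (/ r0)%R by (field; lra). exact Hwz.
Qed.

Definition Good (p : C -> C) (z : C) : Prop := (0 < Re (p z))%R /\ (Cmod (CLog (p z)) < 1)%R.

Lemma Good_open p z l : cderiv p z l -> Good p z -> exists delta, (0 < delta)%R /\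
  forall y, (Cmod (y - z) < delta)%R -> Good p y.
Proof.
intros Hd [H1 H2].
destruct (CLog_cont (p z) H1 (1 - Cmod (CLog (p z)))%R ltac:(lra)) as [e1 [He1 C1]].
destruct (cd_ex_cont p z l Hd (Rmin e1 (Re (p z))) ltac:(apply Rmin_pos; lra)) as [d [Hd0 Cd]].
exists d. split; auto. intros y Hy. specialize (Cd y Hy).
split.
- pose proof (Re_le_Cmod (p y - p z)). pose proof (Rmin_r e1 (Re (p z))).
  replace (Re (p y - p z)) with (Re (p y) - Re (p z))%R in H by (destruct (p y), (p z); simpl; ring).
  pose proof (Rle_abs (- (Re (p y) - Re (p z)))). rewrite Rabs_Ropp in H3. lra.
- assert (Cmod (CLog (p y) - CLog (p z)) < 1 - Cmod (CLog (p z)))%R.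
  { apply C1. eapply Rlt_le_trans; [exact Cd|apply Rmin_l]. }
  pose proof (Cmod_triangle (CLog (p z)) (CLog (p y) - CLog (p z))).
  replace (CLog (p z) + (CLog (p y) - CLog (p z))) with (CLog (p y)) in H0 by ring. lra.
Qed.

Lemma Good_Re p y : Good p y -> (exp (-1) * cos 1 <= Re (p y))%R.
Proof.
intros [H1 H2]. rewrite <- (Cexp_CLog (p y) H1).
destruct (CLog (p y)) as [a b] eqn:E. rewrite Cexp_eq. simpl.
assert (Ha : (Rabs a <= Cmod (a, b))%R) by apply (Re_le_Cmod (a,b)).
assert (Hb : (Rabs b <= Cmod (a, b))%R) by apply (Im_le_Cmod (a,b)).

assert (Hab : (Rabs a < 1 /\ Rabs b < 1)%R) by lra.
assert (H3 : (exp (-1) <= exp a)%R) by (apply Rlt_le, exp_increasing; destruct Hab as [Ha' _]; apply Rabs_def2 in Ha'; lra).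
assert (Hpi := PI2_1).
assert (H4 : (cos 1 <= cos b)%R).
{ assert (cos b = cos (Rabs b)) by (unfold Rabs; destruct Rcase_abs; [rewrite cos_neg|]; reflexivity).
  rewrite H. apply cos_decr_1; try lra. apply Rabs_pos. }
assert (H5 : (0 < cos 1)%R) by (apply cos_gt_0; lra).
pose proof (exp_pos (-1)).
apply Rmult_le_compat; lra.
Qed.

Lemma Good_0 (p : C -> C) : p 0 = 1 -> Good p 0.
Proof. intros H. unfold Good. rewrite H, CLog_1, Cmod_0. simpl. lra. Qed.

Lemma exit_point (p : C -> C) (z1 : C) :
  (forall z, (Cmod z < 1)%R -> exists l, cderiv p z l) -> p 0 = 1 ->
  (Cmod z1 < 1)%R -> ~ Good p z1 ->
  exists r0 t0, (0 < r0 < 1)%R /\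
    (forall z, (Cmod z <= r0)%R -> (0 < Re (p z))%R /\ (Cmod (CLog (p z)) <= 1)%R) /\
    Cmod (CLog (p (circ r0 t0))) = 1%R.
Proof.
intros Hd Hp0 Hz1 Hg1.
assert (HG0 := Good_0 p Hp0).
assert (Hz10 : z1 <> 0) by (intro E; subst; contradiction).
assert (Hm1 := Cmod_pos z1 Hz10).
set (E := fun r => (0 <= r <= Cmod z1)%R /\ forall z, (Cmod z <= r)%R -> Good p z).
assert (HE0 : E 0%R).
{ split. lra. intros z Hz. assert (z = 0) by (apply Cmod_eq_0; pose proof (Cmod_ge_0 z); lra). subst; auto. }
assert (HEb : bound E) by (exists (Cmod z1); intros r [Hr _]; lra).
destruct (completeness E HEb (ex_intro _ _ HE0)) as [r0 [Hub Hlub]].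
destruct (Hd 0 ltac:(rewrite Cmod_0; lra)) as [l0 Hl0].
destruct (Good_open p 0 l0 Hl0 HG0) as [d0 [Hd0 Ho0]].
set (rr := Rmin (d0 / 2) (Cmod z1)).
assert (Hrr : (0 < rr)%R) by (apply Rmin_pos; lra).
assert (HErr : E rr).
{ split. split. lra. apply Rmin_r.
  intros z Hz. apply Ho0. rewrite Cminus_0_r. pose proof (Rmin_l (d0/2) (Cmod z1)). fold rr in H. lra. }
assert (Hr0pos : (0 < r0)%R) by (pose proof (Hub rr HErr); lra).
assert (Hr0le : (r0 <= Cmod z1)%R) by (apply Hlub; intros r [Hr _]; lra).
assert (Hin : forall z, (Cmod z < r0)%R -> Good p z).
{ intros z Hz. apply NNPP. intro Hn.
  assert (Hb : is_upper_bound E (Cmod z)).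
  { intros r [Hr Hr2]. destruct (Rle_dec (Cmod z) r). exfalso; apply Hn, Hr2; auto. lra. }
  specialize (Hlub _ Hb). lra. }
assert (Hcl : forall z, (Cmod z <= r0)%R -> (0 < Re (p z))%R /\ (Cmod (CLog (p z)) <= 1)%R).
{ intros z Hz.
  destruct (Rle_lt_or_eq_dec _ _ Hz) as [Hlt|Heq].
  { destruct (Hin z Hlt). split; lra. }
  destruct (Hd z ltac:(lra)) as [lz Hlz].
  assert (Happ : forall eta, (0 < eta)%R -> exists y, Good p y /\ (Cmod (p y - p z) < eta)%R).
  { intros eta Heta. destruct (cd_ex_cont p z lz Hlz eta Heta) as [d [Hd' Cd]].
    pose proof (Cmod_ge_0 z).
    set (s := Rmin (d / (2 * (Cmod z + 1))) (1/2)).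
    assert (Hs : (0 < s)%R) by (apply Rmin_pos; [apply Rdiv_lt_0_compat; lra|lra]).
    assert (Hs1 : (s <= 1/2)%R) by apply Rmin_r.
    assert (Hs2 : (s <= d / (2 * (Cmod z + 1)))%R) by apply Rmin_l.
    exists (RtoC (1 - s) * z). split.
    - apply Hin. rewrite Cmod_mult, Cmod_R, Rabs_right by lra. rewrite Heq. nra.
    - apply Cd. replace (RtoC (1 - s) * z - z) with (- (RtoC s * z)) by (rewrite RtoC_minus; ring).
      rewrite Cmod_opp, Cmod_mult, Cmod_R, Rabs_right by lra.
      apply Rle_lt_trans with (d / (2 * (Cmod z + 1)) * Cmod z)%R. apply Rmult_le_compat_r; lra.
      apply Rle_lt_trans with (d / (2 * (Cmod z + 1)) * (Cmod z + 1))%R. apply Rmult_le_compat_l. apply Rlt_le, Rdiv_lt_0_compat; lra. lra.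
      replace (d / (2 * (Cmod z + 1)) * (Cmod z + 1))%R with (d / 2)%R by (field; lra). lra. }
  set (c0 := (exp (-1) * cos 1)%R).
  assert (Hc0 : (0 < c0)%R) by (unfold c0; apply Rmult_lt_0_compat; [apply exp_pos| apply cos_gt_0; pose proof PI2_1; lra]).
  assert (HRe : (c0 <= Re (p z))%R).
  { apply Rnot_lt_le. intro Hc. destruct (Happ (c0 - Re (p z))%R ltac:(lra)) as [y [Gy Hy]].
    pose proof (Good_Re p y Gy). pose proof (Re_le_Cmod (p y - p z)).
    replace (Re (p y - p z)) with (Re (p y) - Re (p z))%R in H0 by (destruct (p y), (p z); simpl; ring).
    pose proof (Rle_abs (Re (p y) - Re (p z))). fold c0 in H. lra. }
  split. lra.
  apply Rnot_lt_le. intro Hc.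
  destruct (CLog_cont (p z) ltac:(lra) (Cmod (CLog (p z)) - 1)%R ltac:(lra)) as [e [He Ce]].
  destruct (Happ e He) as [y [[_ Gy] Hy]].
  specialize (Ce (p y) Hy).
  pose proof (Cmod_triangle (CLog (p y)) (CLog (p z) - CLog (p y))).
  replace (CLog (p y) + (CLog (p z) - CLog (p y))) with (CLog (p z)) in H by ring.
  replace (CLog (p z) - CLog (p y)) with (- (CLog (p y) - CLog (p z))) in H by ring.
  rewrite Cmod_opp in H. lra. }
destruct (classic (exists t0, Cmod (CLog (p (circ r0 t0))) = 1%R)) as [[t0 Ht0]|Hno].
{ exists r0, t0. split. lra. split; auto. }
exfalso.
assert (Hcirc : forall t, Good p (circ r0 t)).
{ intros t. assert (Cmod (circ r0 t) <= r0)%R by (rewrite Cmod_circ; lra).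
  destruct (Hcl _ H) as [A B]. split; auto. destruct (Rle_lt_or_eq_dec _ _ B); auto. exfalso; apply Hno; exists t; auto. }
assert (Hlt1 : (r0 < Cmod z1)%R).
{ destruct (Rle_lt_or_eq_dec _ _ Hr0le) as [h|h]; auto. exfalso. destruct (polar z1) as [t [_ Et]]. apply Hg1. rewrite Et, <- h. apply Hcirc. }
assert (Hgau : forall t, exists d : posreal, forall y, (Cmod (y - circ r0 t) < 4 * d)%R -> Good p y).
{ intros t. destruct (Hd (circ r0 t) ltac:(rewrite Cmod_circ; lra)) as [l Hl].
  destruct (Good_open p _ l Hl (Hcirc t)) as [d [Hdd Hy]].
  exists (mkposreal (d/4) ltac:(lra)). simpl. intros y Hy'. apply Hy. lra. }
set (G := fun t => proj1_sig (constructive_indefinite_description _ (Hgau t))).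
assert (HG : forall t y, (Cmod (y - circ r0 t) < 4 * G t)%R -> Good p y).
{ intros t. unfold G. destruct (constructive_indefinite_description _ (Hgau t)). simpl. auto. }
destruct (compactness_value_1d 0 (2 * PI) G) as [d Hdc].
pose proof (cond_pos d) as Hdpos.
set (r' := Rmin (r0 + d / 2) (Cmod z1)).
assert (Hr'1 : (r' <= r0 + d / 2)%R) by apply Rmin_l.
assert (Hr'2 : (r' <= Cmod z1)%R) by apply Rmin_r.
assert (Hr'3 : (r0 < r')%R) by (apply Rmin_glb_lt; lra).
assert (HEr' : E r').
{ split. split. lra. lra.
  intros z Hz. destruct (Rlt_le_dec (Cmod z) r0) as [h|h]. apply Hin; auto.
  destruct (polar z) as [t [Ht Ez]].
  specialize (Hdc t Ht). apply NNPP. intro Hn. apply Hdc. intros [t' [Ht' [Htt Hdt]]]. apply Hn.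
  apply (HG t'). rewrite Ez. eapply Rle_lt_trans. apply circ_diff.
  rewrite (Rabs_right r0) by lra. rewrite Rabs_right by lra.
  pose proof (cond_pos (G t')). pose proof (Rabs_pos (t - t')).
  assert (r0 * Rabs (t - t') <= Rabs (t - t'))%R by (rewrite <- (Rmult_1_l (Rabs (t - t'))) at 2; apply Rmult_le_compat_r; lra).
  lra. }
pose proof (Hub r' HEr'). lra.
Qed.

Lemma ip_le_Cmod (u x : C) : nsq u = 1%R -> (ip u x <= Cmod x)%R.
Proof.
intros Hu. destruct (Rle_dec (ip u x) 0) as [h|h]. pose proof (Cmod_ge_0 x); lra.
apply Rnot_le_lt in h.
rewrite <- (sqrt_Rsqr (ip u x)) by lra. unfold Cmod. apply sqrt_le_1_alt.
destruct u as [a b], x as [c d]. unfold nsq, ip, Rsqr in *. simpl in *.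
replace (c * (c * 1) + d * (d * 1))%R with ((a * a + b * b) * (c * c + d * d))%R by (rewrite Hu; ring).
pose proof (Rle_0_sqr (a * d - b * c)). unfold Rsqr in H. nra.
Qed.

Lemma Ci_sq : Ci * Ci = -1.
Proof. apply injective_projections; unfold Ci; simpl; ring. Qed.

Lemma final_ineq (a1 a2 : R) (W0 A B : C) :
  (a1 - a2 >= sqrt 2 * exp 1)%R -> (0 < a1)%R -> (0 < a2)%R ->
  nsq W0 = 1%R -> ip W0 (Ci * A) = 0%R -> (1 <= ip W0 A)%R ->
  (ip W0 (- B - A) + nsq (Ci * A) <= 0)%R ->
  (sqrt 2 <= Cmod (Cexp W0 * (a1 * A + a2 * B + a2 * (A * A))))%R.
Proof.
intros Hal H1 H2 HW E1 Hm E2.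
set (X := a1 * A + a2 * B + a2 * (A * A)).
assert (HX : (a1 - a2 <= ip W0 X)%R).
{ unfold X. revert HW E1 Hm E2. unfold nsq, ip, Ci.
  destruct W0 as [a b], A as [A1 A2], B as [B1 B2]. simpl. intros HW E1 Hm E2.
  set (m := (a * A1 + b * A2)%R) in *.
  assert (Ez : (b * A1 - a * A2 = 0)%R) by lra.
  assert (EA1 : A1 = (m * a)%R).
  { assert (T : (A1 - m * a = b * (b * A1 - a * A2) + A1 * (1 - (a * a + b * b)))%R) by (unfold m; ring).
    rewrite Ez, HW in T. lra. }
  assert (EA2 : A2 = (m * b)%R).
  { assert (T : (A2 - m * b = - a * (b * A1 - a * A2) + A2 * (1 - (a * a + b * b)))%R) by (unfold m; ring).
    rewrite Ez, HW in T. lra. }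
  clearbody m. subst A1 A2.
  assert (Ha : (-1 <= a)%R) by nra.
  assert (HB : (m * m - m <= a * B1 + b * B2)%R).
  { ring_simplify in E2. replace (m * m)%R with (m * m * (a * a + b * b))%R by (rewrite HW; ring). nra. }
  replace (a * (a1 * (m * a) - 0 * (m * b) + (a2 * B1 - 0 * B2) + (a2 * (m * a * (m * a) - m * b * (m * b)) - 0 * (m * a * (m * b) + m * b * (m * a)))) +
     b * (a1 * (m * b) + 0 * (m * a) + (a2 * B2 + 0 * B1) + (a2 * (m * a * (m * b) + m * b * (m * a)) + 0 * (m * a * (m * a) - m * b * (m * b)))))%R
   with (a1 * m * (a * a + b * b) + a2 * (a * B1 + b * B2) + a2 * m * m * a * (a * a + b * b))%R by ring.
  rewrite HW. 
  assert (a2 * (m * m - m) <= a2 * (a * B1 + b * B2))%R by (apply Rmult_le_compat_l; lra).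
  assert (a2 * m * m * (1 + a) >= 0)%R by (apply Rle_ge; repeat apply Rmult_le_pos; nra).
  assert (a1 - a2 > 0)%R by (assert (0 < sqrt 2 * exp 1)%R by (apply Rmult_lt_0_compat; [apply sqrt_lt_R0; lra|apply exp_pos]); lra).
  assert ((m - 1) * (a1 - a2) >= 0)%R by (apply Rle_ge, Rmult_le_pos; lra).
  lra. }
rewrite Cmod_mult, Cmod_Cexp.
pose proof (ip_le_Cmod W0 X HW).
assert (Ha : (-1 <= Re W0)%R).
{ destruct W0 as [a b]. unfold nsq, ip in HW. simpl in *. nra. }
assert (Hexp : (exp (-1) <= exp (Re W0))%R).
{ destruct (Rle_lt_or_eq_dec _ _ Ha) as [h|h]. left; apply exp_increasing; auto. rewrite h; lra. }
assert (exp (-1) * exp 1 = 1)%R by (rewrite <- exp_plus; replace (-1 + 1)%R with 0%R by ring; apply exp_0).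
pose proof (exp_pos (-1)). pose proof (exp_pos 1). pose proof (sqrt_pos 2).
apply Rle_trans with (exp (-1) * (a1 - a2))%R.
- apply Rle_trans with (exp (-1) * (sqrt 2 * exp 1))%R. right.
  replace (exp (-1) * (sqrt 2 * exp 1))%R with (sqrt 2 * (exp (-1) * exp 1))%R by ring. rewrite H0. ring.
  apply Rmult_le_compat_l; lra.
- assert (0 <= sqrt 2 * exp 1)%R by (apply Rmult_le_pos; lra).
  apply Rmult_le_compat; lra.
Qed.

Lemma ip_scal (x y : C) (r : R) : ip x (RtoC r * y) = (r * ip x y)%R.
Proof. destruct x, y. unfold ip, RtoC, Cmult. simpl. ring. Qed.

Lemma line_circ r0 t0 : line 0 (circ 1 t0) r0 = circ r0 t0.
Proof. unfold line, circ, RtoC, Cmult, Cplus. simpl. f_equal; ring. Qed.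

Theorem theorem4p6 (alpha1 alpha2 : R) (p p1 p2 : C -> C) :
  (0 < alpha1)%R -> (0 < alpha2)%R ->
  (alpha1 - alpha2 >= sqrt 2 * exp 1)%R ->
  (forall z, in_disk z -> cderiv p z (p1 z)) ->
  (forall z, in_disk z -> cderiv p1 z (p2 z)) ->
  p 0 = 1 ->
  subord (fun z => 1 + RtoC alpha1 * z * p1 z + RtoC alpha2 * (z * z) * p2 z)
         (fun z => z + Csqrt (1 + z * z)) ->
  subord p Cexp.
Proof.
intros Ha1 Ha2 Hal Hp Hp1 Hp0 [om [Hom [Hom0 [HomD Hpsi]]]].
assert (Hpsib : forall z, in_disk z ->
  (Cmod (1 + RtoC alpha1 * z * p1 z + RtoC alpha2 * (z * z) * p2 z - 1) < sqrt 2)%R).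
{ intros z Hz. specialize (Hpsi z Hz). cbv beta in Hpsi. rewrite Hpsi. apply h_bound. apply HomD; auto. }
destruct (classic (forall z, in_disk z -> Good p z)) as [Hall|Hnot].
- exists (fun z => CLog (p z)). split; [|split; [|split]].
  + intros z Hz. exists (p1 z * / p z). apply cd_comp. apply cd_CLog. apply (Hall z Hz). apply Hp; auto.
  + cbv beta. rewrite Hp0. apply CLog_1.
  + intros z Hz. apply Hall; auto.
  + intros z Hz. symmetry. apply Cexp_CLog. apply Hall; auto.
- exfalso.
  apply not_all_ex_not in Hnot. destruct Hnot as [z1 Hz1]. apply imply_to_and in Hz1. destruct Hz1 as [Hz1 Hng].
  destruct (exit_point p z1 (fun z Hz => ex_intro _ _ (Hp z Hz)) Hp0 Hz1 Hng) as [r0 [t0 [Hr0 [Hcl Ht0]]]].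
  assert (Hdisk : forall z, (Cmod z <= r0)%R -> in_disk z) by (intros z Hz; unfold in_disk; lra).
  set (w := fun z => CLog (p z)).
  set (w1 := fun z => p1 z * / p z).
  set (w2 := fun z => p2 z * / p z + p1 z * (p1 z * - / (p z * p z))).
  assert (Hpn : forall z, (Cmod z <= r0)%R -> p z <> 0) by (intros z Hz; apply Re_ne0; apply Hcl; auto).
  assert (Hw : forall z, (Cmod z <= r0)%R -> cderiv w z (w1 z)).
  { intros z Hz. unfold w, w1. apply (cd_comp CLog p). apply cd_CLog. apply Hcl; auto. apply Hp; auto. }
  assert (Hw1 : forall z, (Cmod z <= r0)%R -> cderiv w1 z (w2 z)).
  { intros z Hz. unfold w1, w2. apply (cd_mult p1 (fun z => / p z)). apply Hp1; auto.
    apply (cd_comp (fun u => / u) p). apply cd_inv; auto. apply Hp; auto. }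
  assert (Hw0 : w 0 = 0) by (unfold w; rewrite Hp0; apply CLog_1).
  assert (Hsch := schwarz w w1 w2 r0 (proj1 Hr0) Hw Hw1 Hw0 (fun z Hz => proj2 (Hcl z Hz))).
  set (z0 := circ r0 t0).
  assert (Hz0m : Cmod z0 = r0) by (unfold z0; apply Cmod_circ; lra).
  set (W0 := w z0).
  assert (HW0 : nsq W0 = 1%R) by (rewrite nsq_Cmod; unfold W0, w, z0; rewrite Ht0; ring).
  destruct (curve_max2 (circ r0) (fun s => Ci * circ r0 s) (- circ r0 t0) w w1 (w2 z0) t0 0 0 1 Rlt_0_1) as [E1 E2].
  { intros s _. apply rd_circ. }
  { apply rd_circ1. }
  { intros s _. apply Hw. rewrite Cmod_circ; lra. }
  { apply Hw1. fold z0. lra. }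
  { intros s _. rewrite !Rmult_0_l, !Rplus_0_r.
    fold z0. fold W0. rewrite HW0, nsq_Cmod.
    assert (Cmod (circ r0 s) <= r0)%R by (rewrite Cmod_circ; lra).
    destruct (Hcl _ H) as [_ B]. unfold w. pose proof (Cmod_ge_0 (CLog (p (circ r0 s)))).
    replace 1%R with (1 * 1)%R by ring. apply Rmult_le_compat; lra. }
  fold z0 in E1, E2. fold W0 in E1, E2.
  rewrite Rmult_0_l, Rplus_0_r in E1. rewrite Rmult_0_l, Rplus_0_r in E2.
  set (A := w1 z0 * z0). set (B := w2 z0 * z0 * z0).
  assert (E1' : ip W0 (Ci * A) = 0%R) by (rewrite <- E1; f_equal; unfold A; ring).
  assert (E2' : (ip W0 (- B - A) + nsq (Ci * A) <= 0)%R).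
  { replace (- B - A) with (w2 z0 * (Ci * z0) * (Ci * z0) + w1 z0 * - z0).
    replace (Ci * A) with (w1 z0 * (Ci * z0)) by (unfold A; ring). exact E2.
    unfold A, B. transitivity (w2 z0 * z0 * z0 * (Ci * Ci) - w1 z0 * z0). ring. rewrite Ci_sq. ring. }
  set (u := circ 1 t0).
  assert (Hlu : line 0 u r0 = z0) by apply line_circ.
  set (k := fun rho => ((r0 * r0) * nsq (w (line 0 u rho)) - rho * rho)%R).
  assert (Dk : derivable_pt_lim k r0 ((r0 * r0) * (2 * ip W0 (w1 z0 * u)) - (1 * r0 + r0 * 1))%R).
  { unfold k. apply derivable_pt_lim_minus.
    apply derivable_pt_lim_scal.
    pose proof (nsq_deriv (fun rho => w (line 0 u rho)) r0 (w1 (line 0 u r0) * u)) as N.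
    assert (EW : W0 = w (line 0 u r0)) by (unfold W0; f_equal; symmetry; exact Hlu).
    rewrite EW. replace (w1 z0) with (w1 (line 0 u r0)) by (f_equal; exact Hlu).
    apply N. apply rd_chain. rewrite Hlu. apply Hw. lra. apply rd_line.
    apply derivable_pt_lim_mult; apply derivable_pt_lim_id. }
  assert (Hk : (0 <= (r0 * r0) * (2 * ip W0 (w1 z0 * u)) - (1 * r0 + r0 * 1))%R).
  { apply (left_max_deriv k r0 _ r0 (proj1 Hr0) Dk). intros s Hs.
    unfold k. rewrite Hlu. fold W0. rewrite HW0.
    assert (Cmod (line 0 u s) = s).
    { replace (line 0 u s) with (line 0 u s - 0) by ring. rewrite Cmod_line. unfold u. rewrite Cmod_circ by lra.
      rewrite Rabs_right by lra. ring. }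
    pose proof (Hsch (line 0 u s) ltac:(lra)). rewrite H in H0.
    rewrite nsq_Cmod. pose proof (Cmod_ge_0 (w (line 0 u s))).
    assert (0 <= Cmod (w (line 0 u s)) * r0)%R by (apply Rmult_le_pos; lra).
    nra. }
  assert (Hm : (1 <= ip W0 A)%R).
  { unfold A. replace (w1 z0 * z0) with (RtoC r0 * (w1 z0 * u)).
    rewrite ip_scal. nra.
    rewrite <- Hlu. unfold line. ring. }
  pose proof (final_ineq alpha1 alpha2 W0 A B Hal Ha1 Ha2 HW0 E1' Hm E2') as Hf.
  assert (Hin0 : in_disk z0) by (apply Hdisk; lra).
  pose proof (Hpsib z0 Hin0) as Hb.
  assert (HP : Cexp W0 = p z0) by (unfold W0, w; apply Cexp_CLog; apply Hcl; lra).
  assert (Hpz : p z0 <> 0) by (apply Hpn; lra).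
  assert (Eq : 1 + RtoC alpha1 * z0 * p1 z0 + RtoC alpha2 * (z0 * z0) * p2 z0 - 1 =
               Cexp W0 * (RtoC alpha1 * A + RtoC alpha2 * B + RtoC alpha2 * (A * A))).
  { rewrite HP. unfold A, B, w1, w2. field. auto. }
  rewrite Eq in Hb. lra.
Qed.
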